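(* Let $\mathcal{I}$ be an ideal. The following are equivalent: (a) $\mathcal{I}$ is unboring; (b) there is a Hausdorff space in $\mathrm{FinBW}(\mathcal{I})$ which is not a boring space. If additionally the continuum hypothesis (CH) holds, then (a) and (b) are also equivalent to each of: (c) there is an uncountable Mr\'owka space in $\mathrm{FinBW}(\mathcal{I})$; (d) there is an uncountable separable space in $\mathrm{FinBW}(\mathcal{I})$.
   Context: An ideal on an infinite countable set $X$ is a family $\mathcal{I}\subseteq\mathcal{P}(X)$ closed under subsets and finite unions, containing all finite subsets of $X$, with $X\notin\mathcal{I}$; we write $\bigcup\mathcal{I}=X$. $\mathrm{Fin}$ is the ideal of finite subsets of $\omega$. For $Y\subseteq X$, $\mathcal{I}|Y=\{A\cap Y: A\in\mathcal{I}\}$. A topological space $X$ is in $\mathrm{FinBW}(\mathcal{I})$ ($\mathcal{I}$ an ideal on a countable set $M$) if $X$ is Hausdorff and for every sequence $(x_n)_{n\in M}$ in $X$ there is $A\subseteq M$, $A\notin\mathcal{I}$, such that $(x_n)_{n\in A}$ converges in $X$ (i.e., there is $x\in X$ with $\{n\in A: x_n\notin U\}$ finite for every open neighbourhood $U$ of $x$). For $A\subseteq X\times Y$ and $x\in X$ let $A_{(x)}=\{y:(x,y)\in A\}$. $\mathrm{Fin}^2$ is the ideal on $\omega^2$ of all $A$ with $\{n: A_{(n)}\text{ infinite}\}$ finite. $\mathcal{BI}$ is the ideal on $\omega^3$ of all $A\subseteq\omega^3$ for which there is $k$ such that $A_{(i)}\in\mathrm{Fin}^2$ for all $i<k$ and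 $A_{(i)}$ is finite for all $i\ge k$ (here $A_{(i)}=\{(j,l):(i,j,l)\in A\}$). For ideals $\mathcal{I},\mathcal{J}$ write $\mathcal{I}\sqsubseteq\mathcal{J}$ if there is a bijection $f:\bigcup\mathcal{J}\to\bigcup\mathcal{I}$ with $f^{-1}[A]\in\mathcal{J}$ for all $A\in\mathcal{I}$. An ideal $\mathcal{I}$ is boring if $\mathcal{BI}\sqsubseteq\mathcal{I}$, and unboring otherwise. A topological space $X$ is boring if it is sequentially compact and there is a finite $F\subseteq X$ such that every convergent sequence in $X$ with infinitely many distinct values (a ''surjective'' convergent sequence onto an infinite set) converges to some point of $F$. An almost disjoint (AD) family is a family of infinite subsets of $\omega$ with pairwise finite intersections. For an infinite AD family $\mathcal{A}$, $\Phi(\mathcal{A})$ is the space with underlying set $\omega\cup\mathcal{A}\cup\{\infty\}$ where points of $\omega$ are isolated, basic neighbourhoods of $A\in\mathcal{A}$ are $\{A\}\cup(A\setminus F)$ with $F\subseteq\omega$ finite, and basic neighbourhoods of $\infty$ are $\{\infty\}\cup(\mathcal{A}\setminus G)\cup(\omega\setminus(F\cup\bigcup G))$ with $F\subseteq\omega$, $G\subseteq\mathcal{A}$ finite. A Mr\'owka space is a space of the form $\Phi(\mathcal{A})$ for some infinite AD family $\mathcal{A}$. *)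

(* Defs.v *)
From HB Require Import structures.
From mathcomp Require Import all_boot all_order.
From mathcomp Require Import all_classical all_reals all_analysis.
Set Implicit Arguments. Unset Strict Implicit. Unset Printing Implicit Defensive.
Import Order.TTheory.
Local Open Scope classical_set_scope.

Definition is_ideal (M : Type) (I : set (set M)) : Prop :=
  [/\ (forall A B : set M, B `<=` A -> I A -> I B),
      (forall A B : set M, I A -> I B -> I (A `|` B)),
      (forall A : set M, finite_set A -> I A) &
      ~ I setT].

Definition section (X Y : Type) (A : set (X * Y)) (x : X) : set Y :=
  [set y | A (x, y)].

Definition Fin2 (A : set (nat * nat)) : Prop :=
  finite_set [set n | ~ finite_set (section A n)].

(** BI on omega^3, with (i,j,l) represented as (i,(j,l)). *)
Definition BI (A : set (nat * (nat * nat))) : Prop :=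
  exists k : nat,
    (forall i, (i < k)%N -> Fin2 (section A i)) /\
    (forall i, (k <= i)%N -> finite_set (section A i)).

Definition ideal_below (M N : Type) (I : set (set M)) (J : set (set N)) : Prop :=
  exists f : N -> M, bijective f /\ forall A : set M, I A -> J (f @^-1` A).

Definition unboring (M : Type) (I : set (set M)) : Prop := ~ ideal_below BI I.

Definition conv_on (M : Type) (X : topologicalType) (f : M -> X) (A : set M) (x : X) :=
  forall U : set X, open U -> U x -> finite_set [set n | A n /\ ~ U (f n)].

Definition FinBW (M : Type) (I : set (set M)) (X : topologicalType) : Prop :=
  hausdorff_space X /\
  forall f : M -> X, exists A : set M, ~ I A /\ exists x : X, conv_on f A x.

Definition seq_compact (X : topologicalType) : Prop :=
  forall s : nat -> X, exists phi : nat -> nat,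
    (forall n, (phi n < phi n.+1)%N) /\ exists x : X, (s \o phi) @ \oo --> x.

Definition boring_space (X : topologicalType) : Prop :=
  seq_compact X /\
  exists F : set X, finite_set F /\
    forall s : nat -> X, ~ finite_set (range s) ->
      (exists x : X, s @ \oo --> x) -> exists y, F y /\ s @ \oo --> y.

Definition separable_space (X : topologicalType) : Prop :=
  exists S : set X, countable S /\ dense S.

Definition CH : Prop :=
  forall S : set (set nat), ~ countable S -> (S #= [set: set nat])%card.

Definition AD_family (A : set (set nat)) : Prop :=
  (forall a, A a -> ~ finite_set a) /\
  (forall a b, A a -> A b -> a <> b -> finite_set (a `&` b)).

Definition infinite_AD (A : set (set nat)) : Prop := AD_family A /\ ~ finite_set A.

(** The Mrówka space Phi(A): points inl n (n in omega), inr (inl a) (a in A),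
    inr (inr tt) (= infinity). *)
Definition mrowka (A : set (set nat)) : Type := (nat + (A + unit))%type.

HB.instance Definition _ (A : set (set nat)) := Choice.on (mrowka A).

Section Mrowka.
Context (A : set (set nat)).
Local Notation P := (mrowka A).

Definition mr_nat (n : nat) : P := inl n.
Definition mr_pt (a : A) : P := inr (inl a).
Definition mr_inf : P := inr (inr tt).

Definition mr_open (U : set P) : Prop :=
  (forall a : A, U (mr_pt a) ->
     exists F : set nat, finite_set F /\
       forall n, val a n -> ~ F n -> U (mr_nat n)) /\
  (U mr_inf ->
     exists (F : set nat) (G : set A), finite_set F /\ finite_set G /\
       (forall a : A, ~ G a -> U (mr_pt a)) /\
       (forall n, ~ F n -> (forall a : A, G a -> ~ val a n) -> U (mr_nat n))).

Lemma mr_openT : mr_open setT.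
Proof.
split.
  by move=> a _; exists set0; split=> //; exact: finite_set0.
move=> _; exists set0, set0; split; first exact: finite_set0.
by split; first exact: finite_set0.
Qed.

Lemma mr_openI : setI_closed mr_open.
Proof.
move=> U V [U1 U2] [V1 V2]; split.
  move=> a [Ua Va].
  have [F [fF HF]] := U1 a Ua; have [F' [fF' HF']] := V1 a Va.
  exists (F `|` F'); split; first by rewrite finite_setU.
  by move=> n an nF; split; [apply: HF => // ?; apply: nF; left
                            | apply: HF' => // ?; apply: nF; right].
move=> [Ui Vi].
have [F [G [fF [fG [HG HF]]]]] := U2 Ui.
have [F' [G' [fF' [fG' [HG' HF']]]]] := V2 Vi.
exists (F `|` F'), (G `|` G'); split; first by rewrite finite_setU.
split; first by rewrite finite_setU.
split.
  by move=> a nG; split; [apply: HG => ?; apply: nG; left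
                         | apply: HG' => ?; apply: nG; right].
move=> n nF nG; split.
  by apply: HF => [?|a Ga]; [apply: nF; left | apply: nG; left].
by apply: HF' => [?|a Ga]; [apply: nF; right | apply: nG; right].
Qed.

Lemma mr_open_bigU (I : Type) (f : I -> set P) :
  (forall i, mr_open (f i)) -> mr_open (\bigcup_i f i).
Proof.
move=> H; split.
  move=> a [i _ fia]; have [F [fF HF]] := (H i).1 a fia.
  by exists F; split=> // n an nF; exists i => //; apply: HF.
move=> [i _ fii]; have [F [G [fF [fG [HG HF]]]]] := (H i).2 fii.
exists F, G; split=> //; split=> //; split.
  by move=> a nG; exists i => //; apply: HG.
by move=> n nF nG; exists i => //; apply: HF.
Qed.

HB.instance Definition _ :=
  isOpenTopological.Build P mr_openT mr_openI mr_open_bigU.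

End Mrowka.

(* Main.v *)
Require Import Defs.
From HB Require Import structures.
From mathcomp Require Import all_boot all_order.
From mathcomp Require Import all_classical all_reals all_analysis.
From mathcomp Require Import zify.
From mathcomp Require Import wochoice.
Set Implicit Arguments. Unset Strict Implicit. Unset Printing Implicit Defensive.
Local Open Scope classical_set_scope.

Require Import Defs.
From HB Require Import structures.
From mathcomp Require Import all_boot all_order.
From mathcomp Require Import all_classical all_reals all_analysis.
Set Implicit Arguments. Unset Strict Implicit. Unset Printing Implicit Defensive.
Local Open Scope classical_set_scope.

Lemma finite_nat_bound (A : set nat) : finite_set A -> exists N, forall n, A n -> (n < N)%N.
Proof.
move=> /finite_seqP[s ->]; exists (\max_(i <- s) i).+1 => n /= ns.
by rewrite ltnS; apply: (@leq_bigmax_seq _ s xpredT id n).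
Qed.

Lemma bound_finite (A : set nat) N : (forall n, A n -> (n < N)%N) -> finite_set A.
Proof.
move=> H; apply: (@sub_finite_set _ _ `I_N); last exact: finite_II.
by move=> n /H.
Qed.

Section Conv.
Context (M : Type) (X : topologicalType).
Implicit Types (f : M -> X) (A B : set M) (x y : X).

Lemma conv_sub f A B x : B `<=` A -> conv_on f A x -> conv_on f B x.
Proof.
move=> BA H U oU Ux; apply: sub_finite_set (H U oU Ux) => n [Bn nU]; split=> //; exact: BA.
Qed.

Lemma conv_fin f A x : finite_set A -> conv_on f A x.
Proof. by move=> fA U _ _; apply: sub_finite_set fA => n []. Qed.

Lemma conv_U f A B x : conv_on f A x -> conv_on f B x -> conv_on f (A `|` B) x.
Proof.
move=> HA HB U oU Ux.
have H : finite_set ([set n | A n /\ ~ U (f n)] `|` [set n | B n /\ ~ U (f n)]).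
  by rewrite finite_setU; split; [exact: HA|exact: HB].
by apply: sub_finite_set H => n [[An|Bn] nU]; [left|right].
Qed.

Lemma conv_ae f A x : finite_set [set n | A n /\ f n <> x] -> conv_on f A x.
Proof.
move=> H U oU Ux; apply: sub_finite_set H => n [An nU]; split=> // e.
by apply: nU; rewrite e.
Qed.

Lemma conv_uniq (hX : hausdorff_space X) f A x y :
  infinite_set A -> conv_on f A x -> conv_on f A y -> x = y.
Proof.
move=> Ainf Hx Hy; apply: contrapT => /eqP nxy.
move: hX; rewrite open_hausdorff => /(_ x y nxy) [[U V] /= [xU yV] [oU oV /eqP UV0]].
rewrite inE in xU; rewrite inE in yV.
apply: Ainf; have F1 := Hx U oU xU; have F2 := Hy V oV yV.
have : finite_set ([set n | A n /\ ~ U (f n)] `|` [set n | A n /\ ~ V (f n)]).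
  by rewrite finite_setU.
apply: sub_finite_set => n An.
case: (pselect (U (f n))) => Un; last by left.
case: (pselect (V (f n))) => Vn; last by right.
have : (U `&` V) (f n) by [].
by rewrite UV0.
Qed.

Lemma conv_const (hX : hausdorff_space X) f A A' x c :
  infinite_set A' -> A' `<=` A -> (forall n, A' n -> f n = c) ->
  conv_on f A x -> x = c.
Proof.
move=> Ainf AA' Hc Hx; apply: (conv_uniq hX Ainf (conv_sub AA' Hx)).
apply: conv_ae; apply: sub_finite_set (finite_set0 M) => n [/Hc -> //].
Qed.

End Conv.

Lemma seq_cvgE (X : topologicalType) (s : nat -> X) x :
  s @ \oo --> x <-> conv_on s setT x.
Proof.
split.
  move=> H U oU Ux; have := H U (open_nbhs_nbhs (conj oU Ux)).
  case=> N _ HN; apply: (@bound_finite _ N) => n [_ nU].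
  by rewrite ltnNge; apply/negP => /HN.
move=> H U; rewrite nbhsE => -[B [oB Bx] BU].
have [N HN] := finite_nat_bound (H B oB Bx).
exists N => // n /= Nn; apply: BU; apply: contrapT => nB.
by have := HN n (conj I nB); rewrite ltnNge Nn.
Qed.


Require Import Defs.
From HB Require Import structures.
From mathcomp Require Import all_boot all_order.
From mathcomp Require Import all_classical all_reals all_analysis.
Set Implicit Arguments. Unset Strict Implicit. Unset Printing Implicit Defensive.
Local Open Scope classical_set_scope.

Lemma choice' X Y (P : X -> Y -> Prop) :
  (forall x, exists y, P x y) -> exists f, forall x, P x (f x).
Proof. by move=> /choice [f H]; exists f. Qed.

Lemma finite_inj (T U : Type) (h : T -> U) (D : set T) :
  {in D &, injective h} -> finite_set (h @` D) -> finite_set D.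
Proof. by move=> hi; rewrite (eq_finite_set (inj_card_eq hi)). Qed.

Lemma finite_inj_sub (T U : Type) (h : T -> U) (D : set T) (E : set U) :
  {in D &, injective h} -> (forall t, D t -> E (h t)) -> finite_set E -> finite_set D.
Proof.
move=> hi hDE fE; apply: (finite_inj hi); apply: sub_finite_set fE.
by move=> _ [t Dt <-]; exact: hDE.
Qed.

Lemma infinite_two (T : Type) (S : set T) : infinite_set S ->
  forall a, exists b, S b /\ b <> a.
Proof.
move=> Sinf a; have := infinite_setD Sinf (finite_set1 a).
by move=> /infinite_setN0 [b [Sb /= nb]]; exists b.
Qed.

Section Ideal.
Context (M : Type) (I : set (set M)) (HI : is_ideal I).

Lemma id_sub A B : B `<=` A -> I A -> I B.
Proof. by case: HI => H _ _ _; apply: H. Qed.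
Lemma id_U A B : I A -> I B -> I (A `|` B).
Proof. by case: HI => _ H _ _; apply: H. Qed.
Lemma id_fin A : finite_set A -> I A.
Proof. by case: HI => _ _ H _; apply: H. Qed.
Lemma id_notT : ~ I setT.
Proof. by case: HI. Qed.

Lemma id_bigU_nat (F : nat -> set M) k :
  (forall i, (i < k)%N -> I (F i)) -> I (\bigcup_(i in [set i | (i < k)%N]) F i).
Proof.
elim: k => [|k IH] H.
  by apply: id_sub (id_fin (finite_set0 M)) => m [i /=].
have E : \bigcup_(i in [set i | (i < k.+1)%N]) F i `<=`
         (\bigcup_(i in [set i | (i < k)%N]) F i) `|` F k.
  move=> m [i /= ik Fm]; move: ik; rewrite ltnS leq_eqVlt => /orP[/eqP ik|ik].
    by subst i; right.
  by left; exists i.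
apply: id_sub E _; apply: id_U; last exact: H.
by apply: IH => i ik; apply: H; apply: ltnW.
Qed.

Lemma id_bigU_fin (F : nat -> set M) (D : set nat) :
  finite_set D -> (forall i, D i -> I (F i)) -> I (\bigcup_(i in D) F i).
Proof.
move=> /finite_nat_bound [N HN] H.
have E : \bigcup_(i in D) F i `<=` \bigcup_(i in [set i | (i < N)%N]) (fun i =>
   if pselect (D i) then F i else set0) i.
  move=> m [i Di Fm]; exists i; first exact: HN.
  by case: (pselect (D i)).
apply: id_sub E _; apply: id_bigU_nat => i _; case: (pselect (D i)) => Di.
  exact: H.
exact: id_fin (finite_set0 M).
Qed.

Lemma pos_split A B : ~ I (A `|` B) -> ~ I A \/ ~ I B.
Proof.
move=> H; case: (pselect (I A)) => HA; last by left.
by right => HB; apply: H; apply: id_U.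
Qed.

Lemma pos_inf A : ~ I A -> infinite_set A.
Proof. by move=> H fA; apply: H; apply: id_fin. Qed.

Lemma pos_sub A B : B `<=` A -> ~ I B -> ~ I A.
Proof. by move=> BA nB IA; apply: nB; apply: id_sub IA. Qed.

Lemma pos_D A F : ~ I A -> finite_set F -> ~ I (A `\` F).
Proof.
move=> nA fF IAF; apply: nA; apply: id_sub (id_U IAF (id_fin fF)).
by move=> m Am; case: (pselect (F m)) => Fm; [right|left].
Qed.

End Ideal.

Lemma BI_fin (A : set (nat * (nat * nat))) : finite_set A -> BI A.
Proof.
move=> fA; exists 0%N; split => // i _.
have : finite_set (snd @` [set t | A t /\ t.1 = i]).
  by apply: finite_image; apply: sub_finite_set fA => t [].
by apply: sub_finite_set => jl /= Ajl; exists (i, jl).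
Qed.

Lemma notBI (A : set (nat * (nat * nat))) : ~ BI A ->
  (exists i, infinite_set [set j | infinite_set (section (section A i) j)]) \/
  infinite_set [set i | infinite_set (section A i)].
Proof.
move=> nA; apply: contrapT => /not_orP [/forallNP H1 /contrapT H2].
apply: nA; have [N HN] := finite_nat_bound H2.
exists N; split.
  by move=> i _; apply: contrapT; apply: H1.
move=> i Ni; apply: contrapT => ni; have := HN i ni.
by rewrite ltnNge Ni.
Qed.

Lemma FinBW_transfer (M : Type) (I : set (set M)) (X : topologicalType) :
  ideal_below BI I -> FinBW I X -> FinBW BI X.
Proof.
move=> [f [[g fK gK] HfI]] [hX HX]; split => // s.
have [B [nIB [x Hx]]] := HX (s \o f).
have E : f @^-1` (f @` B) = B.
  apply/seteqP; split => m /=; last by exists m.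
  by move=> [m' Bm' /(can_inj fK) <-].
exists (f @` B); split.
  by move=> /HfI; rewrite E.
exists x => U oU Ux.
apply: sub_finite_set (finite_image f (Hx U oU Ux)).
by move=> _ [[m Bm <-] nU]; exists m.
Qed.


Lemma incr_ge (phi : nat -> nat) : (forall n, (phi n < phi n.+1)%N) -> forall n, (n <= phi n)%N.
Proof.
move=> H; elim => // n IH; exact: leq_ltn_trans IH (H n).
Qed.

Lemma subseq_of_infinite (X : topologicalType) (s : nat -> X) (N : set nat) x :
  infinite_set N -> conv_on s N x ->
  exists phi : nat -> nat, (forall n, (phi n < phi n.+1)%N) /\ (s \o phi) @ \oo --> x.
Proof.
move=> Ninf Hc.
have [|f [finc _ fN]] := @infinite_increasing_seq_wf _ nat N _ Ninf 0%N.
  by move=> n; apply: (@bound_finite _ n.+1) => y /=; rewrite ltnS.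
have fS : forall n, (f n < f n.+1)%N.
  move=> n; have := finc n.+1 n; rewrite ltnn => /negbT.
  by rewrite -ltnNge.
exists f; split => //; apply/seq_cvgE => U oU Ux.
have [K HK] := finite_nat_bound (Hc U oU Ux).
apply: (@bound_finite _ K) => n [_ /= nU].
exact: leq_ltn_trans (incr_ge fS n) (HK _ (conj (fN n) nU)).
Qed.

Lemma FinBW_BI_seqc (X : topologicalType) : FinBW BI X -> seq_compact X.
Proof.
move=> [_ HX] s.
pose sm (t : nat * (nat * nat)) := (t.1 + t.2.1 + t.2.2)%N.
have [A [nBI [x Hx]]] := HX (s \o sm).
suff [phi [H1 H2]] : exists phi : nat -> nat, (forall n, (phi n < phi n.+1)%N) /\ (s \o phi) @ \oo --> x.
  by exists phi; split => //; exists x.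
apply: (@subseq_of_infinite _ s (sm @` A) x).
  move=> /finite_nat_bound [K HK]; apply: nBI; apply: BI_fin.
  have : finite_set (`I_K `*` (`I_K `*` `I_K)).
    by apply: finite_setX; [exact: finite_II| apply: finite_setX; exact: finite_II].
  apply: sub_finite_set => -[i [j l]] At.
  have := HK _ (ex_intro2 _ _ _ At erefl); rewrite /sm /= => H.
  by split; [|split] => /=; lia.
move=> U oU Ux.
apply: sub_finite_set (finite_image sm (Hx U oU Ux)).
by move=> _ [[t At <-] nU]; exists t.
Qed.


Section Boring.
Context (X : topologicalType) (hX : hausdorff_space X) (HX : FinBW BI X).

Let seqc := FinBW_BI_seqc HX.

Lemma FinBW_BI_boring : boring_space X.
Proof.
split => //; apply: contrapT => NB.
have Hch : forall F : set X, finite_set F ->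
    exists s : nat -> X, exists x, infinite_set (range s) /\ s @ \oo --> x /\ ~ F x.
  move=> F fF; move/forallNP: NB => /(_ F) /not_andP [//|].
  move/existsNP => [s] /not_implyP [rs] /not_implyP [[x sx]] nF.
  exists s, x; split => //; split => // Fx; apply: nF; exists x; split.
  exact: Fx. exact: sx.
have [s0 [x0 _]] := Hch set0 (finite_set0 X).
have [ch Hc] : exists ch : set X -> (nat -> X) * X, forall F, finite_set F ->
    infinite_set (range (ch F).1) /\ (ch F).1 @ \oo --> (ch F).2 /\ ~ F (ch F).2.
  apply: (@choice' _ _ (fun F sx => finite_set F -> infinite_set (range sx.1) /\
       sx.1 @ \oo --> sx.2 /\ ~ F sx.2)) => F.
  case: (pselect (finite_set F)) => fF; last by exists (s0, x0).
  by have [s [x H]] := Hch F fF; exists (s, x).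
pose fix S n := if n is n'.+1 then S n' `|` [set (ch (S n')).2] else set0.
have Sfin : forall n, finite_set (S n).
  elim => [|n IH] /=; first exact: finite_set0.
  by rewrite finite_setU; split => //; exact: finite_set1.
pose xs n := (ch (S n)).2.
pose ss n := (ch (S n)).1.
have xsS : forall m n, (m < n)%N -> S n (xs m).
  move=> m; elim => // n IH; rewrite ltnS leq_eqVlt => /orP[/eqP ->|mn] /=.
    by right.
  by left; apply: IH.
have xsinj : forall m n, xs m = xs n -> m = n.
  move=> m n E; apply/eqP; apply: contrapT => /negP mn.
  have [mn'|nm|e] := ltngtP m n.
  - by have := (Hc _ (Sfin n)).2.2; rewrite -/(xs n) -E; apply; apply: xsS.
  - by have := (Hc _ (Sfin m)).2.2; rewrite -/(xs m) E; apply; apply: xsS.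
  - first [by move: mn; rewrite e eqxx | by apply: mn; rewrite e | by apply: mn; apply/eqP | by move: e mn; rewrite eqxx].
have sscv : forall n, ss n @ \oo --> xs n by move=> n; exact: (Hc _ (Sfin n)).2.1.
have ssinf : forall n, infinite_set (range (ss n)) by move=> n; exact: (Hc _ (Sfin n)).1.
have [pk Hpk] : exists pk : nat -> set X -> X, forall i U, finite_set U ->
    range (ss i) (pk i U) /\ ~ U (pk i U).
  apply: (@choice' _ _ (fun i f => forall U, finite_set U -> range (ss i) (f U) /\ ~ U (f U))) => i.
  apply: (@choice' _ _ (fun U v => finite_set U -> range (ss i) v /\ ~ U v)) => U.
  case: (pselect (finite_set U)) => fU; last by exists x0.
  have := infinite_setD (ssinf i) fU => /infinite_setN0 [v [rv nv]].
  by exists v.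
pose fix used n := if n is n'.+1 then used n' `|`
   (match (unpickle n' : option (nat * nat)) with Some p => [set pk p.1 (used n')] | None => set0 end)
   else set0.
have ufin : forall n, finite_set (used n).
  elim => [|n IH] /=; first exact: finite_set0.
  rewrite finite_setU; split => //; case: unpickle => [p|]; [exact: finite_set1|exact: finite_set0].
have umono : forall m n, (m <= n)%N -> used m `<=` used n.
  have H : forall m k, used m `<=` used (k + m)%N.
    move=> m; elim => // k IH v /IH Hv; rewrite addSn /=; left; exact: Hv.
  by move=> m n /subnK <-; apply: H.
pose y (i j : nat) := pk i (used (pickle ((i, j) : nat * nat))).
have yin : forall i j, used (pickle (i,j)).+1 (y i j).
  by move=> i j /=; right; rewrite pickleK.
have yinj : forall i j i' j', y i j = y i' j' -> (i, j) = (i', j').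
  move=> i j i' j' E; apply: contrapT => ne.
  have pne : pickle (i, j) <> pickle (i', j') by move/(pcan_inj pickleK).
  have [lt|gt|eq] := ltngtP (pickle (i, j)) (pickle (i', j')).
  - have := (Hpk i' _ (ufin (pickle (i', j')))).2; rewrite -/(y i' j') -E; apply.
    by apply: (umono _ _ lt); apply: yin.
  - have := (Hpk i _ (ufin (pickle (i, j)))).2; rewrite -/(y i j) E; apply.
    by apply: (umono _ _ gt); apply: yin.
  - by apply: pne; apply/eqP; rewrite eq.
have yrange : forall i j, range (ss i) (y i j).
  by move=> i j; exact: (Hpk i _ (ufin _)).1.
have yconv : forall i U, open U -> U (xs i) -> finite_set [set j | ~ U (y i j)].
  move=> i U oU Ux.
  have F1 := (proj1 (seq_cvgE _ _) (sscv i)) U oU Ux.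
  apply: (@finite_inj_sub _ _ (y i) _ (ss i @` [set n | setT n /\ ~ U (ss i n)])).
  - by move=> j j' _ _ /yinj [].
  - move=> j /= nU; have [n _ En] := yrange i j; exists n => //.
    by split => //; rewrite En.
  - exact: finite_image.
pose g (t : nat * (nat * nat)) := y t.1 t.2.1.
have [A [nBI [z Hz]]] := HX.2 g.
pose col i j := [set t : nat * (nat * nat) | A t /\ t.1 = i /\ t.2.1 = j].
have colE : forall i j, infinite_set (section (section A i) j) -> infinite_set (col i j).
  move=> i j Hinf fc; apply: Hinf.
  have : finite_set ((fun t : nat * (nat * nat) => t.2.2) @` col i j) by exact: finite_image.
  apply: sub_finite_set => l /= Al; exists (i, (j, l)) => //.
have colz : forall i j, infinite_set (section (section A i) j) -> z = y i j.
  move=> i j Hinf; apply: (conv_const hX (colE _ _ Hinf) _ _ Hz).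
    by move=> t [].
  by move=> t [_ [<- <-]].
case: (notBI nBI) => [[i Hi]|Hs].
  have [j1 Hj1] := infinite_setN0 Hi.
  have [j2 [Hj2 ne]] := infinite_two Hi j1.
  have := colz _ _ Hj1; rewrite (colz _ _ Hj2) => /yinj [E]; exact: ne.
have key : forall i, infinite_set (section A i) -> z = xs i \/ exists j, z = y i j.
  move=> i Hi.
  case: (pselect (exists j, infinite_set (section (section A i) j))) => [[j Hj]|Hn].
    by right; exists j; apply: colz.
  left; have Hn' : forall j, finite_set (section (section A i) j).
    by move=> j; apply: contrapT => H; apply: Hn; exists j.
  pose Ai := [set t : nat * (nat * nat) | A t /\ t.1 = i].
  have Aiinf : infinite_set Ai.
    move=> fA; apply: Hi.
    have : finite_set ((fun t : nat * (nat * nat) => t.2) @` Ai) by exact: finite_image.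
    by apply: sub_finite_set => jl /= Ajl; exists (i, jl).
  apply: (conv_uniq hX Aiinf (conv_sub (fun t (H : Ai t) => H.1) Hz)).
  move=> U oU Ux.
  have : finite_set (\bigcup_(j in [set j | ~ U (y i j)])
      ((fun l => (i, (j, l))) @` section (section A i) j)).
    apply: bigcup_finite; first exact: yconv.
    by move=> j _; apply: finite_image.
  apply: sub_finite_set => -[i' [j l]] [[At ii] nU]; simpl in ii; subst i'.
  by exists j => //; exists l.
have [i1 Hi1] := infinite_setN0 Hs.
have [i2 [Hi2 n12]] := infinite_two Hs i1.
have [i3 [[Hi3 n31] n32]] := infinite_two (infinite_setD Hs (finite_set1 i1)) i2.
have [e1|[j1 e1]] := key _ Hi1; have [e2|[j2 e2]] := key _ Hi2;
  have [e3|[j3 e3]] := key _ Hi3.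
all: try (by apply: n12; apply: xsinj; rewrite -e1 -e2).
all: try (by apply: n31; apply: xsinj; rewrite -e1 -e3).
all: try (by apply: n32; apply: xsinj; rewrite -e2 -e3).
all: try (by apply: n12; have := yinj _ _ _ _ (etrans (esym e1) e2); case).
all: try (by apply: n31; have := yinj _ _ _ _ (etrans (esym e1) e3); case).
all: try (by apply: n32; have := yinj _ _ _ _ (etrans (esym e2) e3); case).
Qed.

End Boring.


Lemma open_fin_bigcap (T : eqType) (X : topologicalType) (F : set T) (V : T -> set X) :
  finite_set F -> (forall p, F p -> open (V p)) -> open (\bigcap_(p in F) V p).
Proof.
move=> /finite_seqP [s ->]; elim: s => [|a s IH] H.
  have -> : \bigcap_(p in [set` [::]]) V p = setT.
    by apply/seteqP; split => // x _ p.
  exact: openT.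
have -> : \bigcap_(p in [set` (a :: s)]) V p = V a `&` \bigcap_(p in [set` s]) V p.
  apply/seteqP; split => x.
    move=> H1; split; first by apply: H1; rewrite /= inE eqxx.
    by move=> p ps; apply: H1; rewrite /= inE ps orbT.
  move=> [Va H1] p /=; rewrite inE => /orP[/eqP ->//|ps]; exact: H1.
apply: openI; first by apply: H; rewrite /= inE eqxx.
by apply: IH => p ps; apply: H; rewrite /= inE ps orbT.
Qed.

Lemma countableU2 T (A B : set T) : countable A -> countable B -> countable (A `|` B).
Proof.
move=> cA cB.
have -> : A `|` B = \bigcup_(b in [set: bool]) (if b then A else B).
  apply/seteqP; split => x; first by case=> H; [exists true|exists false].
  by case=> -[] _ H; [left|right].
by apply: bigcup_countable => // -[] _.
Qed.

Lemma countable_infinite_seq T (D : set T) : countable D -> infinite_set D ->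
  exists t : nat -> T, injective t /\ (forall n, D (t n)).
Proof.
move=> cD iD; have := eq_card_nat cD iD.
move/card_set_bijP => [f [_ _ fsurj]].
have [t Ht] : exists t : nat -> T, forall n, D (t n) /\ f (t n) = n.
  apply: (@choice' _ _ (fun n x => D x /\ f x = n)) => n.
  by have [x Dx fx] := fsurj n I; exists x.
exists t; split; last by move=> n; case: (Ht n).
by move=> m n E; rewrite -(Ht m).2 -(Ht n).2 E.
Qed.

Lemma incr_lt (phi : nat -> nat) : (forall n, (phi n < phi n.+1)%N) ->
  forall m n, (m < n)%N -> (phi m < phi n)%N.
Proof.
move=> H m; elim => // n IH; rewrite ltnS leq_eqVlt => /orP[/eqP ->|mn].
  exact: H.
exact: ltn_trans (IH mn) (H n).
Qed.

Lemma sep_boring_countable (X : topologicalType) (hX : hausdorff_space X) :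
  boring_space X -> separable_space X -> countable [set: X].
Proof.
move=> [seqc [F [fF HF]]] [D [cD dD]].
suff sub : [set: X] `<=` D `|` F.
  apply: sub_countable (subset_card_le sub) _.
  by apply: countableU2 => //; apply: finite_set_countable.
move=> y _; apply: contrapT => /not_orP [nD nF].
have hsep : forall p, exists VW : set X * set X, p <> y ->
    [/\ open VW.1, open VW.2, VW.1 y, VW.2 p & VW.1 `&` VW.2 = set0].
  move=> p; case: (pselect (p = y)) => py; first by exists (setT, setT).
  have := hX; rewrite open_hausdorff => /(_ y p) []; first by apply/eqP => E; apply: py.
  move=> [V W] /= [yV pW] [oV oW /eqP VW]; exists (V, W) => _.
  by rewrite !inE in yV pW; split.
have [VW HVW] := choice' hsep.
have pny : forall p, F p -> p <> y by move=> p Fp E; apply: nF; rewrite -E.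
pose V0 := \bigcap_(p in F) (VW p).1.
have oV0 : open V0.
  apply: open_fin_bigcap => // p Fp.
  by have [] := HVW p (pny p Fp).
have V0y : V0 y.
  by move=> p Fp; have [] := HVW p (pny p Fp).
have finVD : finite_set (V0 `&` D).
  apply: contrapT => iVD.
  have [t [tinj tD]] := countable_infinite_seq (sub_countable (subset_card_le (@subIsetr _ V0 D)) cD) iVD.
  have [phi [phiS [q tq]]] := seqc t.
  have phiinj : injective phi.
    move=> m n E; apply/eqP; apply: contrapT => /negP mn.
    have [lt1|gt1|e] := ltngtP m n.
    - by have := incr_lt phiS lt1; rewrite E ltnn.
    - by have := incr_lt phiS gt1; rewrite E ltnn.
    - by move: mn; rewrite e eqxx.
  have rinf : infinite_set (range (t \o phi)).
    move=> fr; apply: infinite_nat.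
    apply: (@finite_inj_sub _ _ (t \o phi) _ (range (t \o phi)) _ _ fr).
      by move=> m n _ _ /tinj /phiinj.
    by move=> n _; exists n.
  have [p [Fp tp]] := HF (t \o phi) rinf (ex_intro _ q tq).
  have [_ oW _ Wp VW0] := HVW p (pny p Fp).
  have := (proj1 (seq_cvgE _ _) tp) _ oW Wp.
  move=> fS; apply: infinite_nat; apply: sub_finite_set fS => n _; split => // Wn.
  have : ((VW p).1 `&` (VW p).2) (t (phi n)).
    split => //; have [] := tD (phi n); by move=> /(_ p Fp).
  by rewrite VW0.
have hacc := hausdorff_accessible hX.
have cl : closed (V0 `&` D) by apply: (proj1 accessible_finite_set_closed hacc).
have oV1 : open (V0 `\` (V0 `&` D)) by apply: openI => //; exact: closed_openC.
have ne : (V0 `\` (V0 `&` D)) !=set0 by exists y; split => // -[].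
by have [z [[V0z nz] Dz]] := dD (V0 `\` (V0 `&` D)) ne oV1; apply: nz.
Qed.


Section MrowkaFacts.
Context (A : set (set nat)).
Local Notation P := (mrowka A).

Definition mrN (n : nat) : set P := [set mr_nat A n].
Definition mrP (a : A) (F : set nat) : set P :=
  [set p | p = mr_pt a \/ exists2 n, p = mr_nat A n & val a n /\ ~ F n].
Definition mrQ (G : set A) (F : set nat) : set P :=
  [set p | p = mr_inf A \/ (exists2 a, p = mr_pt a & ~ G a) \/
           (exists2 n, p = mr_nat A n & ~ F n /\ forall a, G a -> ~ val a n)].

Lemma mr_pt_inj (a b : A) : mr_pt a = mr_pt b -> a = b.
Proof. by case. Qed.

Lemma open_mrN n : open (mrN n).
Proof. by split => [a []|[]]. Qed.

Lemma open_mrP a F : finite_set F -> open (mrP a F).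
Proof.
move=> fF; split; last by move=> [|[]].
move=> a' [/mr_pt_inj ->|[n]] //.
by exists F; split => // n an nF; right; exists n.
Qed.

Lemma AD_fin_inter (HA : AD_family A) (a : A) (G : set A) :
  finite_set G -> ~ G a -> finite_set (val a `&` \bigcup_(b in G) val b).
Proof.
move=> fG nG; have : finite_set (\bigcup_(b in G) (val a `&` val b)).
  apply: bigcup_finite => // b Gb; apply: HA.2; try exact: set_valP.
  by move=> E; apply: nG; rewrite (val_inj E).
apply: sub_finite_set => n [an [b Gb bn]]; exists b => //.
Qed.

Lemma open_mrQ (HA : AD_family A) G F :
  finite_set G -> finite_set F -> open (mrQ G F).
Proof.
move=> fG fF; split.
  move=> a [//|[[a' /mr_pt_inj <- nG]|[n //]]].
  exists (F `|` (val a `&` \bigcup_(b in G) val b)); split.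
    by rewrite finite_setU; split => //; apply: AD_fin_inter.
  move=> n an nF; right; right; exists n => //; split.
    by move=> Fn; apply: nF; left.
  by move=> b Gb bn; apply: nF; right; split => //; exists b.
move=> _; exists F, G; split => //; split => //; split.
  by move=> a nG; right; left; exists a.
by move=> n nF nG; right; right; exists n.
Qed.

Lemma disj0 (T : Type) (U V : set T) : (forall p, U p -> V p -> False) -> U `&` V = set0.
Proof. by move=> H; apply/seteqP; split => // p [/H]. Qed.

Lemma mr_hausdorff (HA : AD_family A) : hausdorff_space P.
Proof.
rewrite open_hausdorff.
suff H : forall x y : P, x <> y -> exists U V : set P,
    [/\ open U, open V, U x, V y & U `&` V = set0].
  move=> x y /eqP nxy; have [U [V [oU oV Ux Vy UV]]] := H x y nxy.
  by exists (U, V); rewrite ?inE //=; split => //; apply/eqP.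
have sym : forall x y : P, (exists U V : set P, [/\ open U, open V, U x, V y & U `&` V = set0]) ->
                      (exists U V : set P, [/\ open U, open V, U y, V x & U `&` V = set0]).
  by move=> x y [U [V [? ? ? ? E]]]; exists V, U; split => //; rewrite setIC.
have NN : forall n m, n <> m -> exists U V : set P,
    [/\ open U, open V, U (mr_nat A n), V (mr_nat A m) & U `&` V = set0].
  move=> n m nm; exists (mrN n), (mrN m); split; try exact: open_mrN; try by [].
  apply: disj0 => p /= -> [E]; exact: nm E.
have NP : forall n a, exists U V : set P,
    [/\ open U, open V, U (mr_nat A n), V (mr_pt a) & U `&` V = set0].
  move=> n a; exists (mrN n), (mrP a [set n]); split; try exact: open_mrN.
  - by apply: open_mrP; exact: finite_set1.
  - by [].
  - by left.
  apply: disj0 => p /= -> [//|[k [E] [_ nk]]]; by apply: nk; rewrite E.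
have NI : forall n, exists U V : set P,
    [/\ open U, open V, U (mr_nat A n), V (mr_inf A) & U `&` V = set0].
  move=> n; exists (mrN n), (mrQ set0 [set n]); split; try exact: open_mrN.
  - by apply: open_mrQ; [exact: HA|exact: finite_set0|exact: finite_set1].
  - by [].
  - by left.
  apply: disj0 => p /= -> [//|[[a' //]|[k [E] [nk _]]]]; by apply: nk; rewrite E.
have PP : forall a b, a <> b -> exists U V : set P,
    [/\ open U, open V, U (mr_pt a), V (mr_pt b) & U `&` V = set0].
  move=> a b ab; pose F := val a `&` val b.
  have fF : finite_set F.
    by apply: HA.2; try exact: set_valP; move=> E; apply: ab; apply: val_inj.
  exists (mrP a F), (mrP b F); split; try (by apply: open_mrP); try by left.
  apply: disj0 => p /= [->|[n -> [an nF]]] [].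
  - by move/mr_pt_inj.
  - by move=> [n //].
  - by [].
  - by move=> [k [E] [bn _]]; subst k; apply: nF; split.
have PI : forall a, exists U V : set P,
    [/\ open U, open V, U (mr_pt a), V (mr_inf A) & U `&` V = set0].
  move=> a; exists (mrP a set0), (mrQ [set a] set0); split.
  - by apply: open_mrP; exact: finite_set0.
  - by apply: open_mrQ; [exact: HA|exact: finite_set1|exact: finite_set0].
  - by left.
  - by left.
  apply: disj0 => p /= [->|[n -> [an _]]] [].
  - by [].
  - by move=> [[b /mr_pt_inj E nb]|[n //]]; apply: nb; rewrite E.
  - by [].
  by move=> [[b //]|[k [E] [_ H]]]; subst k; apply: (H a).
move=> [n|[a|[]]] [m|[b|[]]] ne.
- by apply: NN => E; apply: ne; rewrite E.
- exact: NP.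
- exact: NI.
- exact: sym (NP m a).
- by apply: PP => E; apply: ne; rewrite E.
- exact: PI.
- exact: sym (NI m).
- exact: sym (PI b).
- by case: ne.
Qed.


Section Conv.
Context (M : Type) (f : M -> P) (B : set M).
Definition fib (p : P) := [set m | B m /\ f m = p].

Lemma conv_pt a : (forall n, finite_set (fib (mr_nat A n))) ->
  finite_set [set m | B m /\ ~ (f m = mr_pt a \/ exists2 n, f m = mr_nat A n & val a n)] ->
  conv_on f B (mr_pt a).
Proof.
move=> Hn H2 U oU Ua; have [F [fF HF]] := oU.1 a Ua.
have : finite_set ([set m | B m /\ ~ (f m = mr_pt a \/ exists2 n, f m = mr_nat A n & val a n)]
   `|` \bigcup_(n in F) fib (mr_nat A n)).
  by rewrite finite_setU; split => //; apply: bigcup_finite.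
apply: sub_finite_set => m [Bm nU].
case: (pselect (f m = mr_pt a \/ exists2 n, f m = mr_nat A n & val a n)) => [[E|[n E an]]|H]; last by left.
  by exfalso; apply: nU; rewrite E.
right; exists n; last by split.
apply: contrapT => nF; apply: nU; rewrite E; exact: HF.
Qed.

Lemma conv_inf : (forall n, finite_set (fib (mr_nat A n))) ->
  (forall a, finite_set (fib (mr_pt a))) ->
  (forall a : A, finite_set [set m | B m /\ exists2 n, f m = mr_nat A n & val a n]) ->
  conv_on f B (mr_inf A).
Proof.
move=> H1 H2 H3 U oU Ui; have [F [G [fF [fG [HG HF]]]]] := oU.2 Ui.
have : finite_set ((\bigcup_(n in F) fib (mr_nat A n)) `|`
   (\bigcup_(a in G) fib (mr_pt a)) `|`
   (\bigcup_(a in G) [set m | B m /\ exists2 n, f m = mr_nat A n & val a n])).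
  by rewrite !finite_setU; split; [split|]; apply: bigcup_finite.
apply: sub_finite_set => m [Bm nU].
case E: (f m) nU => [n|[a|[]]] nU.
- case: (pselect (F n)) => Fn; first by left; left; exists n.
  case: (pselect (exists2 a, G a & val a n)) => [[a Ga an]|nG].
    by right; exists a => //; split => //; exists n.
  by exfalso; apply: nU; apply: HF => // a Ga an; apply: nG; exists a.
- case: (pselect (G a)) => Ga; first by left; right; exists a.
  by exfalso; apply: nU; apply: HG.
- by exfalso; apply: nU; exact: Ui.
Qed.

Lemma conv_pt_inv1 a : conv_on f B (mr_pt a) -> forall n, finite_set (fib (mr_nat A n)).
Proof.
move=> H n; apply: sub_finite_set (H _ (open_mrP a (finite_set1 n)) (or_introl erefl)).
move=> m [Bm E]; split => //; rewrite E => -[//|[k [<-] [_]]]; exact.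
Qed.

Lemma conv_pt_inv2 a : conv_on f B (mr_pt a) ->
  finite_set [set m | B m /\ ~ (f m = mr_pt a \/ exists2 n, f m = mr_nat A n & val a n)].
Proof.
move=> H; apply: sub_finite_set (H _ (open_mrP a (finite_set0 nat)) (or_introl erefl)).
move=> m [Bm nE]; split => // -[E|[n E [an _]]]; apply: nE; first by left.
by right; exists n.
Qed.

Lemma conv_inf_inv1 (HA : AD_family A) : conv_on f B (mr_inf A) ->
  forall n, finite_set (fib (mr_nat A n)).
Proof.
move=> H n.
have oU := open_mrQ HA (finite_set0 A) (finite_set1 n).
apply: sub_finite_set (H _ oU (or_introl erefl)).
move=> m [Bm E]; split => //; rewrite E => -[//|[[a //]|[k [<-] [nk _]]]]; exact: nk.
Qed.

Lemma conv_inf_inv2 (HA : AD_family A) : conv_on f B (mr_inf A) ->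
  forall a, finite_set (fib (mr_pt a)).
Proof.
move=> H a.
have oU := open_mrQ HA (finite_set1 a) (finite_set0 nat).
apply: sub_finite_set (H _ oU (or_introl erefl)).
move=> m [Bm E]; split => //; rewrite E => -[//|[[b /mr_pt_inj <-]|[k //]]]; exact.
Qed.

Lemma conv_inf_inv3 (HA : AD_family A) : conv_on f B (mr_inf A) ->
  forall a : A, finite_set [set m | B m /\ exists2 n, f m = mr_nat A n & val a n].
Proof.
move=> H a.
have oU := open_mrQ HA (finite_set1 a) (finite_set0 nat).
apply: sub_finite_set (H _ oU (or_introl erefl)).
move=> m [Bm [n E an]]; split => //; rewrite E => -[//|[[b //]|[k [<-] [_ Hk]]]].
exact: (Hk a).
Qed.

Lemma conv_nat_inv n : conv_on f B (mr_nat A n) ->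
  finite_set [set m | B m /\ f m <> mr_nat A n].
Proof.
move=> H; apply: sub_finite_set (H _ (open_mrN n) erefl).
by move=> m [Bm E]; split.
Qed.

End Conv.

End MrowkaFacts.


Lemma infinite_enum (N : set nat) : infinite_set N ->
  exists phi : nat -> nat, (forall n, (phi n < phi n.+1)%N) /\ (forall n, N (phi n)).
Proof.
move=> Ninf.
have [|f [finc _ fN]] := @infinite_increasing_seq_wf _ nat N _ Ninf 0%N.
  by move=> n; apply: (@bound_finite _ n.+1) => y /=; rewrite ltnS.
exists f; split => // n; have := finc n.+1 n; rewrite ltnn => /negbT.
by rewrite -ltnNge.
Qed.

Lemma incr_inj (phi : nat -> nat) : (forall n, (phi n < phi n.+1)%N) -> injective phi.
Proof.
move=> phiS m n E; apply/eqP; apply: contrapT => /negP mn.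
have [lt1|gt1|e] := ltngtP m n.
- by have := incr_lt phiS lt1; rewrite E ltnn.
- by have := incr_lt phiS gt1; rewrite E ltnn.
- by move: mn; rewrite e eqxx.
Qed.

Section MrowkaMore.
Context (A : set (set nat)) (HA : AD_family A) (Ainf : ~ finite_set A).
Local Notation P := (mrowka A).

Lemma exists_notin (G : set A) : finite_set G -> exists a : A, ~ G a.
Proof.
move=> fG; apply: contrapT => /forallNP H; apply: Ainf.
have : finite_set (val @` G) by exact: finite_image.
apply: sub_finite_set => x Ax; exists (SigSub (mem_set Ax)) => //.
by apply: contrapT; apply: H.
Qed.

Lemma mr_not_boring : ~ boring_space P.
Proof.
move=> [seqc [F [fF HF]]].
have [a na] : exists a : A, ~ F (mr_pt a).
  apply: exists_notin; apply: (@finite_inj_sub _ _ (@mr_pt A) _ F) => //.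
  by move=> x y _ _ /mr_pt_inj.
have ainf : infinite_set (val a) by apply: HA.1; exact: set_valP.
have [phi [phiS phia]] := infinite_enum ainf.
pose s n := mr_nat A (phi n).
have sinj : injective s by move=> m n [] /(incr_inj phiS).
have rinf : infinite_set (range s).
  move=> fr; apply: infinite_nat.
  apply: (@finite_inj_sub _ _ s _ (range s) _ _ fr) => //.
    by move=> m n _ _ /sinj.
have sa : s @ \oo --> mr_pt a.
  apply/seq_cvgE; apply: conv_pt.
    move=> n; apply: (@finite_inj_sub _ _ s _ [set mr_nat A n] _ _ (finite_set1 _)).
      by move=> m k _ _ /sinj.
    by move=> m [].
  apply: sub_finite_set (finite_set0 nat) => m [_ H]; apply: H; right.
  by exists (phi m).
have [y [Fy sy]] := HF s rinf (ex_intro (fun x : P => s @ \oo --> x) _ sa).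
have := conv_uniq (mr_hausdorff HA) infinite_nat (proj1 (seq_cvgE _ _) sy)
  (proj1 (seq_cvgE _ _) sa).
by move=> E; apply: na; rewrite -E.
Qed.

Lemma mr_separable : separable_space P.
Proof.
exists (range (mr_nat A)); split.
  by apply: sub_countable (card_image_le _ _) _; exact: countableP.
move=> O [p Op] oO.
case: p Op => [n|[a|[]]] Op.
- by exists (mr_nat A n); split => //; exists n.
- have [F [fF HF]] := oO.1 a Op.
  have ainf : infinite_set (val a) by apply: HA.1; exact: set_valP.
  have [n [an nF]] := infinite_setN0 (infinite_setD ainf fF).
  by exists (mr_nat A n); split; [apply: HF|exists n].
- have [F [G [fF [fG [HG HF]]]]] := oO.2 Op.
  have [b nb] := exists_notin fG.
  have binf : infinite_set (val b) by apply: HA.1; exact: set_valP.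
  have fI := AD_fin_inter HA fG nb.
  have fFI : finite_set (F `|` (val b `&` \bigcup_(c in G) val c)) by rewrite finite_setU.
  have := infinite_setN0 (infinite_setD binf fFI).
  move=> [n [bn nFI]]; exists (mr_nat A n); split; last by exists n.
  apply: HF; first by move=> Fn; apply: nFI; left.
  by move=> c Gc cn; apply: nFI; right; split => //; exists c.
Qed.

End MrowkaMore.

Lemma mr_uncountable (A : set (set nat)) : ~ countable A -> ~ countable [set: mrowka A].
Proof.
move=> nA /countable_injP [h hinj]; apply: nA; apply/countable_injP.
pose g (x : set nat) : nat := match pselect (A x) with
  | left Ax => h (mr_pt (SigSub (mem_set Ax))) | right _ => 0%N end.
exists g => x y; rewrite !inE => Ax Ay; rewrite /g.
case: pselect => // Ax'; case: pselect => // Ay'.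
by move=> /(hinj _ _ (mem_set I) (mem_set I)) [].
Qed.


Lemma fiber_enum (M : countType) (T : Type) (c : M -> T) :
  (forall t, infinite_set [set m | c m = t]) ->
  exists e : M -> nat, (forall m m', c m = c m' -> e m = e m' -> m = m') /\
                       (forall t n, exists m, c m = t /\ e m = n).
Proof.
move=> Hinf.
have H : forall t, exists f : M -> nat, set_bij [set m | c m = t] [set: nat] f.
  move=> t; apply/card_set_bijP; apply: eq_card_nat => //; exact: countableP.
have [F HF] := choice' H.
exists (fun m => F (c m) m); split.
  move=> m m' E; rewrite -E => Ee; have [_ Hi _] := HF (c m).
  by apply: Hi; rewrite ?inE //=.
move=> t n; have [_ _ Hs] := HF t; have [m /= cm Fm] := Hs n I.
by exists m; rewrite cm.
Qed.

Section GL.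
Context (M : countType) (I : set (set M)) (HI : is_ideal I) (d : M -> nat * nat).
Hypothesis Dinf : forall c, infinite_set [set m | d m = c].
Hypothesis D1 : forall c, I [set m | d m = c].
Hypothesis D2 : forall i (B : set M), (forall m, B m -> (d m).1 = i) ->
  (forall j, finite_set [set m | B m /\ d m = (i, j)]) -> I B.
Hypothesis D3 : forall B : set M, (forall i, finite_set [set m | B m /\ (d m).1 = i]) -> I B.

Lemma GL_below : ideal_below BI I.
Proof.
have [e [einj esurj]] := fiber_enum Dinf.
pose h (m : M) : nat * (nat * nat) := ((d m).1, ((d m).2, e m)).
have hinj : injective h.
  move=> m m' [E1 E2 E3]; apply: einj => //.
  by rewrite [d m]surjective_pairing [d m']surjective_pairing E1 E2.
have [g Hg] : exists g : nat * (nat * nat) -> M, forall t, h (g t) = t.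
  apply: (@choice' _ _ (fun t m => h m = t)) => -[i [j l]].
  have [m [dm em]] := esurj (i, j) l; exists m.
  by rewrite /h dm em.
exists h; split.
  by exists g => [m|t]; [apply: hinj; rewrite Hg|exact: Hg].
move=> A [k [Hlo Hhi]].
pose Phi := [set m | A (h m) /\ (k <= (d m).1)%N].
pose J i := [set j | ~ finite_set (section (section A i) j)].
pose PJ i := \bigcup_(j in J i) [set m | d m = (i, j)].
pose PF i := [set m | A (h m) /\ (d m).1 = i /\ ~ J i (d m).2].
have E : h @^-1` A `<=` Phi `|` \bigcup_(i in [set i | (i < k)%N]) (PJ i `|` PF i).
  move=> m /= Am; case: (leqP k (d m).1) => ki; first by left.
  right; exists (d m).1 => //.
  case: (pselect (J (d m).1 (d m).2)) => Jm.
    by left; exists (d m).2 => //; rewrite -surjective_pairing.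
  by right.
apply: (id_sub HI E); apply: (id_U HI).
  apply: D3 => i; case: (leqP k i) => ki; last first.
    by apply: sub_finite_set (finite_set0 M) => m [[_ km] E1]; move: km; rewrite E1 leqNgt ki.
  apply: (@finite_inj_sub _ _ (fun m => ((d m).2, e m)) _ (section A i)).
  - move=> m m' /set_mem [_ E1] /set_mem [_ E1'] [E2 E3]; apply: einj => //.
    by rewrite [d m]surjective_pairing [d m']surjective_pairing E1 E1' E2.
  - by move=> m [[Am _] E1]; rewrite /section /=; rewrite -E1.
  - exact: Hhi.
apply: id_bigU_nat => // i ik; apply: (id_U HI).
  apply: id_bigU_fin => //; first exact: (Hlo i ik).
apply: (D2 (i:=i)); first by move=> m [_ []].
move=> j; case: (pselect (J i j)) => Jj.
  by apply: sub_finite_set (finite_set0 M) => m [[_ [_ nJ]] dm]; apply: nJ; rewrite dm.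
apply: (@finite_inj_sub _ _ e _ (section (section A i) j)).
- move=> m m' /set_mem [_ E1] /set_mem [_ E1'] E2; apply: einj => //.
  by rewrite E1 E1'.
- by move=> m [[Am _] dm]; rewrite /section /=; move: Am; rewrite /h dm.
- by apply: contrapT.
Qed.

End GL.


Definition cnt (X : set nat) (x : nat) : nat := count (fun y => `[< X y >]) (iota 0 x).

Lemma cntS X x : cnt X x.+1 = (cnt X x + `[< X x >])%N.
Proof.
by rewrite /cnt -addn1 iotaD count_cat add0n /= addn0.
Qed.

Lemma cnt_mono X x y : (x <= y)%N -> (cnt X x <= cnt X y)%N.
Proof.
move=> /subnK <-; elim: (y - x)%N => // k IH.
by rewrite addSn cntS; apply: leq_trans IH (leq_addr _ _).
Qed.

Section CntInf.
Context (X : set nat) (Xinf : infinite_set X).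

Lemma cnt_inj x y : X x -> X y -> cnt X x = cnt X y -> x = y.
Proof.
move=> Xx Xy E; apply/eqP; apply: contrapT => /negP nxy.
wlog lt : x y Xx Xy E nxy / (x < y)%N.
  move=> Hw; have [xy|yx|e] := ltngtP x y.
  - exact: Hw xy.
  - by apply: (Hw y x) => //; rewrite eq_sym.
  - by move: nxy; rewrite e eqxx.
have Xt : `[< X x >] = true by apply/asboolP.
by have := cnt_mono X lt; rewrite cntS E Xt addn1 ltnn.
Qed.

Lemma cnt_unbounded n : exists y, (n <= cnt X y)%N.
Proof.
elim: n => [|n [y Hy]]; first by exists 0%N.
have [x [Xx yx]] : exists x, X x /\ (y <= x)%N.
  apply: contrapT => H; apply: Xinf; apply: (@bound_finite _ y) => x Xx.
  by rewrite ltnNge; apply/negP => yx; apply: H; exists x.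
exists x.+1; rewrite cntS (_ : `[< X x >] = true); last by apply/asboolP.
by rewrite addn1 ltnS (leq_trans Hy) // cnt_mono.
Qed.

Lemma cnt_onto n : exists x, X x /\ cnt X x = n.
Proof.
have [y Hy] := cnt_unbounded n.+1.
have ex : exists y, (n < cnt X y)%N by exists y.
pose x0 := ex_minn ex.
have [Hx0 minx0] : (n < cnt X x0)%N /\ forall z, (n < cnt X z)%N -> (x0 <= z)%N.
  by rewrite /x0; case: ex_minnP.
case: x0 Hx0 minx0 => [|x] Hx0 minx0; first by rewrite /cnt /= in Hx0.
have le : (cnt X x <= n)%N.
  by rewrite leqNgt; apply/negP => /minx0; rewrite ltnn.
move: Hx0; rewrite cntS; case: (pselect (X x)) => Xx.
  rewrite (_ : `[< X x >] = true); last by apply/asboolP.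
  by rewrite addn1 ltnS => H; exists x; split => //; apply/eqP; rewrite eqn_leq le H.
rewrite (_ : `[< X x >] = false); last by apply/asboolPn.
by rewrite addn0 ltnNge le.
Qed.

Lemma cnt_fin n : finite_set [set i | cnt X i = n].
Proof.
have [z [Xz Hz]] := cnt_onto n.
apply: (@bound_finite _ z.+1) => i /= Hi; rewrite ltnS leqNgt; apply/negP => zi.
have := cnt_mono X zi; rewrite cntS Hz Hi (_ : `[< X z >] = true); last by apply/asboolP.
by rewrite addn1 ltnn.
Qed.

End CntInf.

Lemma id_bigU_cnt (M : Type) (I : set (set M)) (HI : is_ideal I) (T : countType)
  (F : T -> set M) (D : set T) :
  finite_set D -> (forall i, D i -> I (F i)) -> I (\bigcup_(i in D) F i).
Proof.
move=> fD H.
pose G (k : nat) : set M := match (unpickle k : option T) with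
  | Some c => if pselect (D c) then F c else set0 | None => set0 end.
have E : \bigcup_(i in D) F i `<=` \bigcup_(k in pickle @` D) G k.
  move=> m [i Di Fm]; exists (pickle i); first by exists i.
  by rewrite /G pickleK; case: pselect.
apply: (id_sub HI E); apply: (id_bigU_fin HI); first exact: finite_image.
move=> k [i Di <-]; rewrite /G pickleK; case: (pselect (D i)) => Di'.
  exact: H.
by case: Di'.
Qed.


Section Struct.
Context (M : countType) (I : set (set M)) (HI : is_ideal I) (q : M -> nat * nat).
Hypothesis Q1 : forall c, I [set m | q m = c].
Hypothesis Q2 : forall i (B : set M), (forall m, B m -> (q m).1 = i) ->
  (forall j, finite_set [set m | B m /\ q m = (i, j)]) -> I B.
Hypothesis Q3 : forall B : set M, (forall i, finite_set [set m | B m /\ (q m).1 = i]) -> I B.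

Let cell i j := [set m | q m = (i, j)].
Let Cinf i := [set j | infinite_set (cell i j)].
Let rich i := infinite_set (Cinf i).

Lemma NR i : ~ rich i -> I [set m | (q m).1 = i].
Proof.
move=> nr; have fC : finite_set (Cinf i) by apply: contrapT.
have E : [set m | (q m).1 = i] `<=` (\bigcup_(j in Cinf i) cell i j) `|`
   [set m | (q m).1 = i /\ ~ Cinf i (q m).2].
  move=> m qm; case: (pselect (Cinf i (q m).2)) => H; last by right.
  by left; exists (q m).2 => //; rewrite /cell /= -qm -surjective_pairing.
apply: (id_sub HI E); apply: (id_U HI).
  by apply: (id_bigU_fin HI fC) => j _; exact: Q1.
apply: (Q2 (i:=i)); first by move=> m [].
move=> j; case: (pselect (Cinf i j)) => Cj.
  by apply: sub_finite_set (finite_set0 M) => m [[_ nC] qm]; apply: nC; rewrite qm.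
by apply: contrapT => H; apply: Cj; apply: contra_not H; apply: sub_finite_set => m [_].
Qed.

Theorem struct_below : ideal_below BI I.
Proof.
case: (pselect (infinite_set [set i | rich i])) => Rinf.
  pose R := [set i | rich i].
  pose d (m : M) := (cnt R (q m).1,
     if pselect (rich (q m).1) then cnt (Cinf (q m).1) (q m).2 else 0%N).
  have dE : forall m i j, q m = (i, j) -> d m = (cnt R i, if pselect (rich i) then cnt (Cinf i) j else 0%N).
    by move=> m i j qm; rewrite /d qm.
  apply: (@GL_below _ _ HI d).
  - move=> [n t]; have [r [Rr Er]] := cnt_onto Rinf n.
    have [j [Cj Ej]] := cnt_onto Rr t.
    apply: (sub_infinite_set _ Cj) => m qm /=; rewrite (dE _ _ _ qm) Er.
    by case: (pselect (rich r)) => [H|H]; [rewrite Ej|].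
  - move=> [n t].
    have E : [set m | d m = (n, t)] `<=` \bigcup_(i in [set i | cnt R i = n])
       (if pselect (rich i) then \bigcup_(j in [set j | cnt (Cinf i) j = t]) cell i j
        else [set m | (q m).1 = i]).
      move=> m /=; rewrite (dE m (q m).1 (q m).2 (surjective_pairing _)) => -[E1 E2].
      exists (q m).1 => //; case: pselect E2 => // r E2.
      by exists (q m).2 => //; rewrite /cell /= -surjective_pairing.
    apply: (id_sub HI E); apply: (id_bigU_fin HI (cnt_fin Rinf n)) => i _.
    case: pselect => r; last exact: NR.
    by apply: (id_bigU_fin HI (cnt_fin r t)) => j _; exact: Q1.
  - move=> n B HB Htr.
    have E : B `<=` \bigcup_(i in [set i | cnt R i = n]) [set m | B m /\ (q m).1 = i].
      move=> m Bm; exists (q m).1 => //=.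
      by rewrite -(HB m Bm) (dE m (q m).1 (q m).2 (surjective_pairing _)).
    apply: (id_sub HI E); apply: (id_bigU_fin HI (cnt_fin Rinf n)) => i /= Hi.
    case: (pselect (rich i)) => r; last first.
      by apply: (id_sub HI _ (NR r)) => m [].
    apply: (Q2 (i:=i)); first by move=> m [].
    move=> j; apply: sub_finite_set (Htr (cnt (Cinf i) j)) => m [[Bm _] qm].
    split => //; rewrite (dE _ _ _ qm) Hi; by case: pselect.
  - move=> B Htr; apply: Q3 => i.
    apply: sub_finite_set (Htr (cnt R i)) => m [Bm qm]; split => //.
    by rewrite (dE m (q m).1 (q m).2 (surjective_pairing _)) qm.
have Rfin : finite_set [set i | rich i] by apply: contrapT.
pose p (m : M) : nat * nat := if pselect (rich (q m).1) then ((q m).1, (q m).2.+1) else ((q m).1, 0%N).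
have pE1 : forall m, rich (q m).1 -> p m = ((q m).1, (q m).2.+1).
  by move=> m r; rewrite /p; case: pselect.
have pE0 : forall m, ~ rich (q m).1 -> p m = ((q m).1, 0%N).
  by move=> m r; rewrite /p; case: pselect.
pose piece c := [set m | p m = c].
have P1 : forall c, I (piece c).
  move=> [i [|j]].
    have E : piece (i, 0%N) `<=` [set m | (q m).1 = i /\ ~ rich i].
      move=> m; rewrite /piece /p /=; case: (pselect (rich (q m).1)) => r.
        by case.
      by case => E1; split => //; rewrite -E1.
    case: (pselect (rich i)) => r.
      by apply: (id_sub HI _ (id_fin HI (finite_set0 M))) => m /E [].
    by apply: (id_sub HI _ (NR r)) => m /E [].
  apply: (id_sub HI _ (Q1 (i, j))) => m; rewrite /piece /p /=.
  case: (pselect (rich (q m).1)) => r; last by case.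
  by case => E1 E2; rewrite [q m]surjective_pairing E1 E2.
have P2 : forall B, (forall c, finite_set [set m | B m /\ p m = c]) -> I B.
  move=> B Htr.
  have E : B `<=` (\bigcup_(i in [set i | rich i]) [set m | B m /\ (q m).1 = i])
     `|` [set m | B m /\ ~ rich (q m).1].
    move=> m Bm; case: (pselect (rich (q m).1)) => r; last by right.
    by left; exists (q m).1.
  apply: (id_sub HI E); apply: (id_U HI).
    apply: (id_bigU_fin HI Rfin) => i ri; apply: (Q2 (i:=i)); first by move=> m [].
    move=> j; apply: sub_finite_set (Htr (i, j.+1)) => m [[Bm E1] qm]; split => //.
    have r' : rich (q m).1 by rewrite E1.
    by rewrite pE1 // qm.
  apply: Q3 => i; apply: sub_finite_set (Htr (i, 0%N)) => m [[Bm nr] E1]; split => //.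
  by rewrite pE0 // E1.
pose Pinf := [set c | infinite_set (piece c)].
have Pinfinf : infinite_set Pinf.
  move=> fP; apply: (id_notT HI).
  have E : [set: M] `<=` (\bigcup_(c in Pinf) piece c) `|` [set m | ~ Pinf (p m)].
    move=> m _; case: (pselect (Pinf (p m))) => H; last by right.
    by left; exists (p m).
  apply: (id_sub HI E); apply: (id_U HI).
    by apply: (id_bigU_cnt HI fP) => c _; exact: P1.
  apply: P2 => c; case: (pselect (Pinf c)) => Hc.
    by apply: sub_finite_set (finite_set0 M) => m [nP pm]; apply: nP; rewrite pm.
  have fc : finite_set (piece c) by apply: contrapT.
  by apply: sub_finite_set fc => m [].
pose X := (fun c : nat * nat => pickle c) @` Pinf.
have Xinf : infinite_set X.
  move=> fX; apply: Pinfinf; apply: (@finite_inj_sub _ _ (fun c : nat * nat => pickle c) _ X _ _ fX).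
    by move=> c c' _ _ /(pcan_inj pickleK).
  by move=> c Pc; exists c.
pose grp m := cnt X (pickle (p m)).
have grpinf : forall n, infinite_set [set m | grp m = n].
  move=> n; have [x [[c Pc <-] Ec]] := cnt_onto Xinf n.
  by apply: (sub_infinite_set _ Pc) => m pm; rewrite /grp /= pm.
have [e [einj esurj]] := fiber_enum grpinf.
pose sp (k : nat) : nat := match (unpickle k : option (nat * nat)) with Some c => c.1 | None => 0%N end.
pose d (m : M) := (grp m, sp (e m)).
have Gfin : forall n, I [set m | grp m = n].
  move=> n.
  have fD : finite_set [set c : nat * nat | cnt X (pickle c) = n].
    apply: (@finite_inj_sub _ _ (fun c : nat * nat => pickle c) _ [set k | cnt X k = n]) => //.
      by move=> c c' _ _ /(pcan_inj pickleK).
    exact: cnt_fin.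
  apply: (id_sub HI _ (id_bigU_cnt HI fD (fun c _ => P1 c))).
  by move=> m gm; exists (p m).
apply: (@GL_below _ _ HI d).
- move=> [n t] fS.
  apply: infinite_nat.
  have fE : finite_set (e @` [set m | d m = (n, t)]) by exact: finite_image.
  apply: (@finite_inj_sub _ _ (fun b : nat => pickle ((t, b) : nat * nat)) [set: nat] _ _ _ fE).
    by move=> b b' _ _ /(pcan_inj pickleK) [].
  move=> b _; have [m [gm em]] := esurj n (pickle ((t, b) : nat * nat)).
  exists m; last exact: em.
  rewrite /= /d; congr pair; first exact: gm.
  by rewrite em /sp pickleK.
- move=> [n t]; apply: (id_sub HI _ (Gfin n)) => m [gm _]; exact: gm.
- move=> n B HB _; apply: (id_sub HI _ (Gfin n)) => m /HB gm; exact: gm.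
- move=> B Htr; apply: P2 => c.
  by apply: sub_finite_set (Htr (cnt X (pickle c))) => m [Bm pm]; split => //; rewrite /d /grp /= pm.
Qed.

End Struct.


Lemma exists_min (P : nat -> Prop) : (exists n, P n) ->
  exists n, P n /\ forall m, P m -> (n <= m)%N.
Proof.
move=> H; have H' : exists n, `[< P n >] by case: H => n Pn; exists n; apply/asboolP.
exists (ex_minn H'); case: ex_minnP => n /asboolP Pn Hn; split => // m Pm.
by apply: Hn; apply/asboolP.
Qed.

Section K.
Context (M : countType) (I : set (set M)) (HI : is_ideal I).
Context (A : set (set nat)) (HA : AD_family A) (cA : countable A).

Theorem FinBW_mrowka : unboring I -> FinBW I (mrowka A).
Proof.
move=> unb; split; first exact: mr_hausdorff.
move=> f; apply: contrapT => nconv.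
have fail : forall B, ~ I B -> forall x, ~ conv_on f B x.
  by move=> B nB x Hx; apply: nconv; exists B; split => //; exists x.
have [iota iotainj] := countable_injP _ cA.
pose Sk k := [set n | exists a : A, iota (val a) = n /\ val a k].
have [slc Hslc] : exists slc : nat -> nat, forall k,
    ((~ exists n, Sk k n) -> slc k = 0%N) /\
    (forall n, Sk k n -> exists n0, [/\ slc k = n0.+1, Sk k n0 & forall m, Sk k m -> (n0 <= m)%N]).
  apply: (@choice' _ _ (fun k v => ((~ exists n, Sk k n) -> v = 0%N) /\
    (forall n, Sk k n -> exists n0, [/\ v = n0.+1, Sk k n0 & forall m, Sk k m -> (n0 <= m)%N]))).
  move=> k; case: (pselect (exists n, Sk k n)) => H.
    have [n0 [Sn0 Hmin]] := exists_min H.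
    by exists n0.+1; split => // n _; exists n0.
  by exists 0%N; split => // n Sn; exfalso; apply: H; exists n.
have iotaE : forall a b : A, iota (val a) = iota (val b) -> a = b.
  move=> a b E; apply: val_inj; apply: iotainj => //; rewrite inE; exact: set_valP.
pose pi (p : mrowka A) : nat * nat := match p with
  | inl k => (slc k, k.+1)
  | inr (inl a) => ((iota (val a)).+1, 0%N)
  | inr (inr _) => (0%N, 0%N) end.
have piinj : injective pi.
  move=> [k|[a|[]]] [k'|[b|[]]] //=; try by case.
  - by case=> _ ->.
  - by case=> /iotaE ->.
pose q m := pi (f m).
apply: unb; apply: (@struct_below _ _ HI q).
-
  move=> c; apply: contrapT => nI.
  have [m0 qm0] := infinite_setN0 (pos_inf HI nI).
  apply: (fail _ nI (f m0)); apply: conv_ae.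
  apply: sub_finite_set (finite_set0 M) => m [qm nE]; apply: nE.
  by apply: piinj; rewrite -/(q m) -/(q m0) qm qm0.
-
  move=> i B HB Htr; apply: contrapT => nI.
  have trn : forall n, finite_set (fib f B (mr_nat A n)).
    move=> n; apply: sub_finite_set (Htr n.+1) => m [Bm fm]; split => //.
    by rewrite /q fm /= -(HB m Bm) /q fm.
  case: i HB Htr => [|i] HB Htr.
    apply: (fail _ nI (mr_inf A)); apply: conv_inf => //.
    + move=> a; apply: sub_finite_set (finite_set0 M) => m [Bm fm].
      by have := HB m Bm; rewrite /q fm.
    + move=> a; apply: sub_finite_set (finite_set0 M) => m [Bm [n fm an]].
      have := HB m Bm; rewrite /q fm /=.
      have [n0 [-> _ _]] := (Hslc n).2 (iota (val a)) (ex_intro _ a (conj erefl an)).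
      by [].
  case: (pselect (exists a : A, iota (val a) = i)) => [[a ia]|nex]; last first.
    apply: nI; apply: (id_fin HI); apply: sub_finite_set (finite_set0 M) => m Bm.
    have := HB m Bm; rewrite /q; case: (f m) => [k|[b|[]]] //=.
    + case: (pselect (exists n, Sk k n)) => [[n Sn]|nS].
        have [n0 [-> [b [ib _]] _]] := (Hslc k).2 n Sn.
        by case => E; apply: nex; exists b; rewrite ib E.
      by rewrite (Hslc k).1.
    + by case=> E; apply: nex; exists b.
  apply: (fail _ nI (mr_pt a)); apply: conv_pt => //.
  apply: sub_finite_set (finite_set0 M) => m [Bm nE]; apply: nE.
  have := HB m Bm; rewrite /q; case E: (f m) => [k|[b|[]]] //=.
  + case: (pselect (exists n, Sk k n)) => [[n Sn]|nS]; last by rewrite (Hslc k).1.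
    have [n0 [-> [b [ib bk]] _]] := (Hslc k).2 n Sn.
    case => E2; right; exists k => //.
    by have -> : a = b by apply: iotaE; rewrite ia ib E2.
  + by case => E2; left; congr (inr (inl _)); apply: iotaE; rewrite ia E2.
-
  move=> B Htr; apply: contrapT => nI.
  apply: (fail _ nI (mr_inf A)); apply: conv_inf.
  + move=> n; apply: sub_finite_set (Htr (slc n)) => m [Bm fm]; split => //.
    by rewrite /q fm.
  + move=> a; apply: sub_finite_set (Htr (iota (val a)).+1) => m [Bm fm]; split => //.
    by rewrite /q fm.
  + move=> a.
    have : finite_set (\bigcup_(i in [set i | (i < (iota (val a)).+2)%N])
              [set m | B m /\ (q m).1 = i]).
      apply: bigcup_finite => //; exact: (@bound_finite _ (iota (val a)).+2).
    apply: sub_finite_set => m [Bm [n fm an]]; exists (q m).1; last by [].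
    rewrite /= /q fm /=.
    have [n0 [-> _ Hmin]] := (Hslc n).2 (iota (val a)) (ex_intro _ a (conj erefl an)).
    by rewrite !ltnS; apply: Hmin; exists a.
Qed.

End K.


Definition seedf (n : nat) : set nat := [set k | exists m, k = pickle ((n, m) : nat * nat)].
Definition seed : set (set nat) := range seedf.

Lemma seedf_inf n : infinite_set (seedf n).
Proof.
move=> fs; apply: infinite_nat.
apply: (@finite_inj_sub _ _ (fun m => pickle ((n, m) : nat * nat)) _ (seedf n) _ _ fs).
  by move=> m m' _ _ /(pcan_inj pickleK) [].
by move=> m _; exists m.
Qed.

Lemma seedf_disj n n' k : seedf n k -> seedf n' k -> n = n'.
Proof. by move=> [m ->] [m' /(pcan_inj pickleK) []]. Qed.

Lemma seedf_inj : injective seedf.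
Proof.
move=> n n' E; have H : seedf n (pickle ((n, 0%N) : nat * nat)) by exists 0%N.
have H' : seedf n' (pickle ((n, 0%N) : nat * nat)) by rewrite -E.
exact: seedf_disj H H'.
Qed.

Lemma seed_AD : AD_family seed.
Proof.
split; first by move=> _ [n _ <-]; exact: seedf_inf.
move=> _ _ [n _ <-] [n' _ <-] ne; apply: sub_finite_set (finite_set0 nat) => k [Hk Hk'].
by apply: ne; rewrite (seedf_disj Hk Hk').
Qed.

Lemma seed_inf : ~ finite_set seed.
Proof.
move=> fs; apply: infinite_nat.
apply: (@finite_inj_sub _ _ seedf _ seed _ _ fs).
  by move=> m m' _ _ /seedf_inj.
by move=> m _; exists m.
Qed.

Lemma seed_countable : countable seed.
Proof. by apply: sub_countable (card_image_le _ _) _; exact: countableP. Qed.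


Definition code (M : Type) := M -> nat + (nat + unit).

Definition Good (M : Type) (I : set (set M)) (A' : set (set nat)) (c : code M) (a : set nat) : Prop :=
  infinite_set a /\ (forall b, A' b -> finite_set (a `&` b)) /\
  exists B, ~ I B /\
   ((exists p, forall m, B m -> c m = p) \/
    ((forall m, B m -> exists k, c m = inr (inl k)) /\
       forall k, finite_set [set m | B m /\ c m = inr (inl k)]) \/
    ((forall m, B m -> exists n, c m = inl n) /\
       (forall n, finite_set [set m | B m /\ c m = inl n]) /\
       exists2 b, (A' b \/ b = a) & finite_set [set m | B m /\ exists2 n, c m = inl n & ~ b n])).

Section Step.
Context (A' : set (set nat)) (HA : AD_family A') (cA : countable A') (Ainf : infinite_set A').

Lemma enum_AD : exists lab : nat -> set nat, (forall n, A' (lab n)) /\ injective lab /\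
  (forall b, A' b -> exists n, lab n = b).
Proof.
have := eq_card_nat cA Ainf => /card_set_bijP [f [_ finj fsurj]].
have [lab Hl] : exists lab : nat -> set nat, forall n, A' (lab n) /\ f (lab n) = n.
  apply: (@choice' _ _ (fun n x => A' x /\ f x = n)) => n.
  by have [x Ax fx] := fsurj n I; exists x.
exists lab; split; first by move=> n; case: (Hl n).
split; first by move=> m n E; rewrite -(Hl m).2 -(Hl n).2 E.
move=> b Ab; exists (f b); apply: finj; rewrite ?inE //; first exact: (Hl _).1.
exact: (Hl _).2.
Qed.

Lemma fresh : exists a : set nat, infinite_set a /\ forall b, A' b -> finite_set (a `&` b).
Proof.
have [lab [labA [labinj labsurj]]] := enum_AD.
pose U n := \bigcup_(i in [set i | (i <= n)%N]) lab i.
have Uc : forall n, infinite_set (~` U n).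
  move=> n; have linf : infinite_set (lab n.+1) by apply: HA.1.
  have fI : finite_set (lab n.+1 `&` U n).
    have : finite_set (\bigcup_(i in [set i | (i <= n)%N]) (lab n.+1 `&` lab i)).
      apply: bigcup_finite; first by apply: (@bound_finite _ n.+1) => i; rewrite ltnS.
      move=> i /= iN; apply: HA.2 => // E; have := labinj _ _ E.
      by move=> Ei; move: iN; rewrite -Ei ltnn.
    by apply: sub_finite_set => k [lk [i iN lik]]; exists i.
  have := infinite_setD linf fI; apply: contra_not => fc.
  by apply: sub_finite_set fc => k [lk nU] Uk; apply: nU.
have [x Hx] : exists x : nat -> nat, forall n, ~ U n (x n) /\ (n <= x n)%N.
  apply: (@choice' _ _ (fun n k => ~ U n k /\ (n <= k)%N)) => n.
  apply: contrapT => /forallNP H; apply: (Uc n); apply: (@bound_finite _ n) => k nk.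
  by rewrite ltnNge; apply/negP => nlek; apply: (H k).
exists (range x); split.
  move=> /finite_nat_bound [K HK]; have := HK (x K) (ex_intro2 _ _ K I erefl).
  by rewrite ltnNge (Hx K).2.
move=> b Ab; have [k <-] := labsurj b Ab.
apply: sub_finite_set (finite_image x (@bound_finite _ k (fun i (H : (i < k)%N) => H))).
move=> _ [[n _ <-] ln]; exists n => //=; rewrite ltnNge; apply/negP => kn.
by apply: (Hx n).1; exists k.
Qed.

End Step.

Section StepLemma.
Context (M : countType) (I : set (set M)) (HI : is_ideal I) (unb : unboring I).
Context (A' : set (set nat)) (HA : AD_family A') (cA : countable A') (Ainf : infinite_set A').

Lemma step (c : code M) : exists a, Good I A' c a.
Proof.
have [lab [labA [labinj labsurj]]] := enum_AD cA Ainf.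
pose labT (k : nat) : A' := SigSub (mem_set (labA k)).
have labTinj : forall k k', labT k = labT k' -> k = k'.
  by move=> k k' E; apply: labinj; have := congr1 val E.
pose f' (m : M) : mrowka A' := match c m with
  | inl n => mr_nat A' n | inr (inl k) => mr_pt (labT k) | inr (inr _) => mr_inf A' end.
have [_ HF] := FinBW_mrowka HI HA cA unb.
have [B [nB [x Hx]]] := HF f'.
have [a0 [a0inf a0AD]] := fresh HA cA Ainf.
pose BN := [set m | B m /\ exists n, c m = inl n].
pose BL := [set m | B m /\ exists k, c m = inr (inl k)].
pose BI := [set m | B m /\ c m = inr (inr tt)].
have Bsub : B `<=` (BN `|` BL) `|` BI.
  move=> m Bm; case E: (c m) => [n|[k|[]]].
  - by left; left; split => //; exists n.
  - by left; right; split => //; exists k.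
  - by right.
have [/(pos_split HI) [nBN|nBL]|nBI] := pos_split HI (pos_sub HI Bsub nB); last first.
-
  exists a0; split => //; split => //; exists BI; split => //; left.
  by exists (inr (inr tt)) => m [].
-
  have HxL : conv_on f' BL x by apply: conv_sub Hx => m [].
  clear Hx; case: x HxL => [n|[b|[]]] HxL.
  + exfalso; apply: (pos_inf HI nBL); apply: sub_finite_set (conv_nat_inv HxL).
    move=> m BLm; split => //; have [_ [k ck]] := BLm; rewrite /f' ck.
    by case.
  + have fE := conv_pt_inv2 HxL.
    have nB' := pos_D HI nBL fE.
    have [m0 [[Bm0 [k0 ck0]] nE0]] := infinite_setN0 (pos_inf HI nB').
    exists a0; split => //; split => //; exists (BL `\` [set m | BL m /\
        ~ (f' m = mr_pt b \/ exists2 n, f' m = mr_nat A' n & val b n)]); split => //.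
    left; exists (c m0) => m [[Bm [k ck]] nE].
    have e1 : f' m = mr_pt b.
      apply: contrapT => ne; apply: nE; split; first by split => //; exists k.
      by case => // -[n]; rewrite /f' ck.
    have e0 : f' m0 = mr_pt b.
      apply: contrapT => ne; apply: nE0; split; first by split => //; exists k0.
      by case => // -[n]; rewrite /f' ck0.
    move: e1 e0; rewrite /f' ck ck0 => -[<-] /mr_pt_inj /labTinj ->.
    done.
  + exists a0; split => //; split => //; exists BL; split => //; right; left.
    split; first by move=> m [].
    move=> k; apply: sub_finite_set (conv_inf_inv2 HA HxL (labT k)) => m [Bm ck].
    by split => //; rewrite /f' ck.
-
  have HxN : conv_on f' BN x by apply: conv_sub Hx => m [].
  have fibE : forall n, [set m | BN m /\ c m = inl n] `<=` fib f' BN (mr_nat A' n).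
    by move=> n m [Bm cm]; split => //; rewrite /f' cm.
  clear Hx; case: x HxN => [n|[b|[]]] HxN.
  + have fE := conv_nat_inv HxN.
    exists a0; split => //; split => //; exists (BN `\` [set m | BN m /\ f' m <> mr_nat A' n]).
    split; first exact: (pos_D HI nBN fE).
    left; exists (inl n) => m [[Bm [k ck]] nE].
    have : f' m = mr_nat A' n by apply: contrapT => ne; apply: nE; split => //; split => //; exists k.
    by rewrite /f' ck => -[->].
  + exists a0; split => //; split => //; exists BN; split => //; right; right.
    split; first by move=> m [].
    split; first by move=> n; apply: sub_finite_set (conv_pt_inv1 HxN n); exact: fibE.
    exists (val b); first by left; exact: set_valP.
    apply: sub_finite_set (conv_pt_inv2 HxN) => m [Bm [n cn nb]]; split => //.
    rewrite /f' cn => -[//|[n' [<-] bn]]; exact: nb.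
  + pose a := [set n | exists2 m, BN m & c m = inl n].
    have fibs : forall n, finite_set [set m | BN m /\ c m = inl n].
      by move=> n; apply: sub_finite_set (conv_inf_inv1 HA HxN n); exact: fibE.
    exists a; split.
      move=> fa; apply: (pos_inf HI nBN).
      have : finite_set (\bigcup_(n in a) [set m | BN m /\ c m = inl n]) by exact: bigcup_finite.
      apply: sub_finite_set => m BNm; have [_ [n cn]] := BNm.
      by exists n; [exists m|].
    split.
      move=> b Ab.
      have := conv_inf_inv3 HA HxN (SigSub (mem_set Ab)) => fb.
      have : finite_set ((fun m => match c m with inl n => n | _ => 0%N end) @`
               [set m | BN m /\ exists2 n, f' m = mr_nat A' n & b n]) by exact: finite_image.
      apply: sub_finite_set => n [[m BNm cm] bn]; exists m; last by rewrite cm.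
      by split => //; exists n => //; rewrite /f' cm.
    exists BN; split => //; right; right.
    split; first by move=> m [].
    split => //; exists a; first by right.
    apply: sub_finite_set (finite_set0 M) => m [BNm [n cn na]]; apply: na; by exists m.
Qed.

End StepLemma.


Section WO.
Context (T : eqType) (R : rel T) (wR : well_order R).

Lemma wo_min (S : set T) : S !=set0 -> exists z, S z /\ forall y, S y -> R z y.
Proof.
move=> [x Sx]; have ne : wochoice.nonempty [pred y | `[< S y >]] by exists x; rewrite inE.
have [z [[zS zlb] _]] := wR ne.
rewrite inE in zS; exists z; split => // y Sy.
by apply: zlb; rewrite inE.
Qed.

Lemma wo_refl x : R x x.
Proof.
have [z [Sz H]] := @wo_min [set x] (ex_intro _ x erefl).
by move: H; rewrite Sz; apply.
Qed.

Lemma wo_antisym x y : R x y -> R y x -> x = y.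
Proof.
move=> xy yx; have ne : wochoice.nonempty [pred z | (z == x) || (z == y)] by exists x; rewrite inE eqxx.
have [z [_ Hu]] := wR ne.
have mx : minimum_of R [pred z | (z == x) || (z == y)] x.
  split; first by rewrite inE eqxx.
  by move=> u; rewrite inE => /orP[/eqP ->|/eqP ->] //; exact: wo_refl.
have my : minimum_of R [pred z | (z == x) || (z == y)] y.
  split; first by rewrite inE eqxx orbT.
  by move=> u; rewrite inE => /orP[/eqP ->|/eqP ->] //; exact: wo_refl.
by rewrite -(Hu _ mx) -(Hu _ my).
Qed.

Lemma wo_total x y : R x y \/ R y x.
Proof.
have [z [Sz H]] := @wo_min [set u | u = x \/ u = y] (ex_intro _ x (or_introl erefl)).
by case: Sz => E; subst z; [left|right]; apply: H; [right|left].
Qed.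

Lemma wo_trans x y z : R x y -> R y z -> R x z.
Proof.
move=> xy yz.
have [w [Sw H]] := @wo_min [set u | u = x \/ u = y \/ u = z] (ex_intro _ x (or_introl erefl)).
case: Sw => [E|[E|E]]; subst w.
- by apply: H; right; right.
- have E : x = y by apply: wo_antisym => //; apply: H; left.
  by rewrite E.
- have E : y = z by apply: wo_antisym => //; apply: H; right; left.
  by rewrite -E.
Qed.

Definition wlt x y := R x y /\ x <> y.

Lemma wlt_trans x y z : wlt x y -> wlt y z -> wlt x z.
Proof.
move=> [xy nxy] [yz nyz]; split; first exact: wo_trans xy yz.
by move=> E; subst z; apply: nxy; apply: wo_antisym.
Qed.

Lemma wlt_total x y : x <> y -> wlt x y \/ wlt y x.
Proof.
by move=> ne; case: (wo_total x y) => H; [left|right]; split => // E; apply: ne.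
Qed.

Lemma wlt_wf : well_founded wlt.
Proof.
move=> x; apply: contrapT => nA.
have [z [nz H]] := @wo_min [set u | ~ Acc wlt u] (ex_intro _ x nA).
apply: nz; constructor => y [yz nyz]; apply: contrapT => ny.
by apply: nyz; apply: wo_antisym yz (H y ny).
Qed.

End WO.

Lemma cantor : ~ countable [set: set nat].
Proof.
move=> /countable_injP [h hinj].
pose D := [set n | exists X, h X = n /\ ~ X n].
have E : forall X, h X = h D -> X = D.
  by move=> X E; exact: (hinj X D (mem_set I) (mem_set I) E).
have nD : ~ D (h D) by move=> Dh; have [X [hX nX]] := Dh; apply: nX; rewrite (E X hX).
exact: nD (ex_intro _ D (conj erefl nD)).
Qed.

Definition code_of_set (M : Type) (e : M -> nat) (X : set nat) : M -> nat + (nat + unit) :=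
  fun m => inl (if pselect (X (e m)) then 1%N else 0%N).

Lemma code_uncountable (M : countType) : infinite_set [set: M] ->
  ~ countable [set: M -> nat + (nat + unit)].
Proof.
move=> Minf cC; apply: cantor.
have := eq_card_nat (countableP [set: M]) Minf => /card_set_bijP [e [_ _ esurj]].
move: cC => /countable_injP [h hinj]; apply/countable_injP.
exists (fun X => h (code_of_set e X)) => X Y _ _ E.
have := hinj _ _ (mem_set I) (mem_set I) E => Ec.
have key : forall m, (X (e m) <-> Y (e m)).
  move=> m; have := congr1 (fun c => c m) Ec; rewrite /code_of_set.
  case: (pselect (X (e m))) => xm; case: (pselect (Y (e m))) => ym //=.
apply/seteqP; split => n; have [m _ <-] := esurj n I; by move/key.
Qed.

Lemma code_surj (M : countType) : exists g0 : set nat -> (M -> nat + (nat + unit)),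
  forall c, exists X, g0 X = c.
Proof.
pose G (c : M -> nat + (nat + unit)) : set nat :=
  [set k | exists m, k = pickle ((pickle m, pickle (c m)) : nat * nat)].
have Ginj : forall c c', G c = G c' -> c = c'.
  move=> c c' E; apply: funext => m.
  have : G c' (pickle ((pickle m, pickle (c m)) : nat * nat)) by rewrite -E; exists m.
  move=> [m' /(pcan_inj pickleK) [/(pcan_inj pickleK) E1 E2]]; subst m'.
  exact: (pcan_inj pickleK E2).
have [g0 Hg0] : exists g0 : set nat -> (M -> nat + (nat + unit)),
    forall X, (exists c, G c = X) -> G (g0 X) = X.
  apply: (@choice' _ _ (fun X c => (exists c, G c = X) -> G c = X)) => X.
  case: (pselect (exists c, G c = X)) => [[c Hc]|nH]; first by exists c.
  by exists (fun _ => inl 0%N).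
exists g0 => c; exists (G c); apply: Ginj; apply: Hg0; by exists c.
Qed.

Definition CHenum (M : countType) :=
  exists (R : rel (set nat)) (code_of : set nat -> (M -> nat + (nat + unit))),
    well_order R /\
    forall c, exists w, countable [set v | wlt R v w] /\ code_of w = c.

Lemma enum_CH (M : countType) : CH -> CHenum M.
Proof.
move=> ch; have [R wR] := well_ordering_principle (set nat).
have [g0 Hg0] := code_surj M.
exists R.
case: (pselect (forall w, countable [set v | wlt R v w])) => Hall.
  exists g0; split => // c; have [X HX] := Hg0 c; by exists X.
have [p0 np0] : exists p, ~ countable [set v | wlt R v p].
  by apply: contrapT => /forallNP H; apply: Hall => w; apply: contrapT; apply: H.
have [p [np pmin]] := wo_min wR (ex_intro (fun p => ~ countable [set v | wlt R v p]) p0 np0).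
have segW : forall v, wlt R v p -> countable [set u | wlt R u v].
  move=> v [vp nvp]; apply: contrapT => nv; apply: nvp.
  exact: (@wo_antisym _ R wR v p vp (pmin v nv)).
have := ch _ np => /card_set_bijP [f [_ _ fsurj]].
exists (fun w => g0 (f w)); split => // c.
have [X HX] := Hg0 c; have [w pw fw] := fsurj X I.
by exists w; split; [exact: segW|rewrite fw].
Qed.


Lemma pick_good (M : Type) (I : set (set M)) S c :
  (exists a', Good I S c a') ->
  Good I S c (match pselect (exists a, Good I S c a) with
              | left H => proj1_sig (cid H) | right _ => set0 end).
Proof. by case: pselect => [H _|nH ex]; [exact: (proj2_sig (cid H))|]. Qed.

Section Cons.
Context (M : countType) (I : set (set M)) (HI : is_ideal I) (unb : unboring I) (ch : CH).

Lemma CH_construction' : exists A : set (set nat), infinite_AD A /\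
    ~ countable [set: mrowka A] /\ FinBW I (mrowka A).
Proof.
have Minf : infinite_set [set: M] by move=> fM; exact: (id_notT HI (id_fin HI fM)).
have [R [code_of [wR Hcode]]] := enum_CH M ch.
pose lt := wlt R.
have wf : well_founded lt := wlt_wf wR.
pose W := [set w | countable [set v | lt v w]].
pose stp (w : set nat) (rec : forall v, lt v w -> set nat) : set nat :=
  match pselect (exists a, Good I [set b | seed b \/ exists v (H : lt v w), b = rec v H] (code_of w) a) with
  | left H => proj1_sig (cid H) | right _ => set0 end.
pose a := Fix wf (fun _ => set nat) stp.
have aE : forall w, a w = stp w (fun v _ => a v).
  move=> w; rewrite /a Fix_eq // => x f g Hfg.
  have -> : f = g; last by [].
  apply: functional_extensionality_dep => v; apply: functional_extensionality_dep => H.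
  exact: Hfg.
pose Aw w := [set b | seed b \/ exists2 v, lt v w & b = a v].
have AwE : forall w, [set b | seed b \/ exists v (H : lt v w), b = a v] = Aw w.
  move=> w; apply/seteqP; split => b [Sb|[v]]; try by left.
  - by move=> [H ->]; right; exists v.
  - by move=> H ->; right; exists v, H.
have aGood : forall w, (exists a', Good I (Aw w) (code_of w) a') -> Good I (Aw w) (code_of w) (a w).
  move=> w ex; rewrite aE /stp -AwE; apply: pick_good; by rewrite AwE.
have ADU : forall D : set (set nat), (forall v, D v -> Good I (Aw v) (code_of v) (a v)) ->
    AD_family [set b | seed b \/ exists2 v, D v & b = a v].
  move=> D HD; split.
    move=> b [Sb|[v Dv ->]]; first exact: seed_AD.1.
    by case: (HD v Dv).
  move=> b1 b2 [S1|[v1 D1 ->]] [S2|[v2 D2 ->]] ne.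
  - exact: seed_AD.2.
  - by rewrite setIC; apply: (HD v2 D2).2.1; left.
  - by apply: (HD v1 D1).2.1; left.
  - have nv : v1 <> v2 by move=> E; apply: ne; rewrite E.
    case: (wlt_total wR nv) => H.
      by rewrite setIC; apply: (HD v2 D2).2.1; right; exists v1.
    by apply: (HD v1 D1).2.1; right; exists v2.
have inv : forall w, W w -> Good I (Aw w) (code_of w) (a w).
  apply: (well_founded_ind wf) => w IH Ww.
  have Wv : forall v, lt v w -> W v.
    move=> v vw; apply: sub_countable Ww; apply: subset_card_le => u uv.
    exact: wlt_trans uv vw.
  have Gv : forall v, lt v w -> Good I (Aw v) (code_of v) (a v).
    by move=> v vw; apply: IH => //; exact: Wv.
  apply: aGood; apply: step => //.
  - exact: ADU Gv.
  - have sub : Aw w `<=` seed `|` (a @` [set v | lt v w]).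
      by move=> b [Sb|[v vw ->]]; [left|right; exists v].
    apply: sub_countable (subset_card_le sub) _; apply: countableU2.
      exact: seed_countable.
    exact: sub_countable (card_image_le _ _) Ww.
  - by move=> fA; apply: seed_inf; apply: sub_finite_set fA => b Sb; left.
pose A := [set b | seed b \/ exists2 w, W w & b = a w].
have HA : AD_family A := ADU W inv.
have Ainf : infinite_set A by move=> fA; apply: seed_inf; apply: sub_finite_set fA => b Sb; left.
have ainj : {in W &, injective a}.
  move=> w v; rewrite !inE => Ww Wv E; apply: contrapT => nv.
  have ainfw := (inv w Ww).1.
  case: (wlt_total wR nv) => H.
    have := (inv v Wv).2.1 (a w) (or_intror (ex_intro2 _ _ w H erefl)).
    by rewrite E setIid; apply: (inv v Wv).1.
  have := (inv w Ww).2.1 (a v) (or_intror (ex_intro2 _ _ v H erefl)).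
  by rewrite E setIid; apply: (inv v Wv).1.
have Wunc : ~ countable W.
  move=> cW; apply: (code_uncountable Minf).
  apply: sub_countable (subset_card_le _) (sub_countable (card_image_le code_of W) cW).
  by move=> c _; have [w [Ww <-]] := Hcode c; exists w.
exists A; split; first by split.
split.
  apply: mr_uncountable => cA; apply: Wunc.
  rewrite -(eq_countable (inj_card_eq ainj)).
  apply: sub_countable (subset_card_le _) cA.
  by move=> _ [w Ww <-]; right; exists w.
split; first exact: mr_hausdorff.
move=> f.
have [m0 _] := infinite_setN0 Minf.
have [mwit Hmw] : exists mwit : A -> M, forall b, (exists m', f m' = mr_pt b) -> f (mwit b) = mr_pt b.
  apply: (@choice' _ _ (fun b m => (exists m', f m' = mr_pt b) -> f m = mr_pt b)) => b.
  case: (pselect (exists m', f m' = mr_pt b)) => [[m' Hm']|nH]; first by exists m'.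
  by exists m0.
pose c (m : M) : nat + (nat + unit) := match f m with
  | inl n => inl n | inr (inl b) => inr (inl (pickle (mwit b))) | inr (inr _) => inr (inr tt) end.
have cinj : forall m m', c m = c m' -> f m = f m'.
  move=> m m'; rewrite /c.
  case E: (f m) => [n|[b|[]]]; case E': (f m') => [n'|[b'|[]]] //.
  - by case=> ->.
  - case=> /(pcan_inj pickleK) Ew.
    have e1 := Hmw b (ex_intro _ m E); have e2 := Hmw b' (ex_intro _ m' E').
    by change (mr_pt b = mr_pt b'); rewrite -e1 -e2 Ew.
have cnat : forall m n, c m = inl n -> f m = mr_nat A n.
  by move=> m n; rewrite /c; case: (f m) => [k|[b|[]]] // [->].
have [w [Ww cw]] := Hcode c.
have [ainf [aAD [B [nB H]]]] := inv w Ww; rewrite cw in H.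
exists B; split => //.
case: H => [[p Hp]|[[HL Hfin]|[HN [Hfib [b Hb Hfb]]]]].
- have [m1 Bm1] := infinite_setN0 (pos_inf HI nB).
  exists (f m1); apply: conv_ae; apply: sub_finite_set (finite_set0 M) => m [Bm nE].
  by apply: nE; apply: cinj; rewrite (Hp m Bm) (Hp m1 Bm1).
- exists (mr_inf A); apply: conv_inf.
  + move=> n; apply: sub_finite_set (finite_set0 M) => m [Bm fm].
    by have [k] := HL m Bm; rewrite /c fm.
  + move=> b; apply: sub_finite_set (Hfin (pickle (mwit b))) => m [Bm fm].
    by split => //; rewrite /c fm.
  + move=> b; apply: sub_finite_set (finite_set0 M) => m [Bm [n fm _]].
    by have [k] := HL m Bm; rewrite /c fm.
- have Ab : A b.
    case: Hb => [[Sb|[v vw ->]]|->]; [by left| |by right; exists w].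
    right; exists v => //; apply: sub_countable Ww; apply: subset_card_le => u uv.
    exact: wlt_trans uv vw.
  exists (mr_pt (SigSub (mem_set Ab) : A)); apply: conv_pt.
  + move=> n; apply: sub_finite_set (Hfib n) => m [Bm fm]; split => //.
    by rewrite /c fm.
  + apply: sub_finite_set Hfb => m [Bm nE]; split => //.
    have [n cn] := HN m Bm; exists n => // bn; apply: nE; right; exists n => //.
    exact: cnat.
Qed.

End Cons.


Unset Implicit Arguments.

Theorem theorem6p6 (M : countType) (I : set (set M)) (HI : is_ideal I) :
  (unboring I <->
     exists X : topologicalType, hausdorff_space X /\ FinBW I X /\ ~ boring_space X) /\
  (CH ->
     (unboring I <->
        exists A : set (set nat), infinite_AD A /\
          ~ countable [set: mrowka A] /\ FinBW I (mrowka A)) /\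
     (unboring I <->
        exists X : topologicalType, ~ countable [set: X] /\
          separable_space X /\ FinBW I X)).
Proof.
have below_boring : forall X : topologicalType, hausdorff_space X -> FinBW I X ->
    ~ unboring I -> boring_space X.
  move=> X hX HF nu; have Hb : ideal_below BI I by apply: contrapT.
  exact: FinBW_BI_boring hX (FinBW_transfer Hb HF).
split.
  split.
    move=> unb; exists (mrowka seed); split; first exact: mr_hausdorff seed_AD.
    split. exact: (FinBW_mrowka HI seed_AD seed_countable unb).
    exact: mr_not_boring seed_AD seed_inf.
  move=> [X [hX [HF nb]]]; apply: contrapT => nu; apply: nb.
  exact: below_boring hX HF nu.
move=> ch; split; split.
- by move=> unb; exact: (CH_construction' HI unb ch).
- move=> [A [[HA Ainf] [_ HF]]]; apply: contrapT => nu.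
  apply: (mr_not_boring HA Ainf); exact: below_boring (mr_hausdorff HA) HF nu.
- move=> unb; have [A [[HA Ainf] [nc HF]]] := CH_construction' HI unb ch.
  exists (mrowka A); split => //; split => //; exact: mr_separable.
- move=> [X [nc [sep HF]]]; apply: contrapT => nu; apply: nc.
  apply: sep_boring_countable HF.1 _ sep.
  exact: below_boring HF.1 HF nu.
Qed.
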